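(* Consider the two-tubes TFE equations (defined in the context). (A) For every $v<0$ there exist exactly two (up to translation) traveling wave solutions $(c_1,c_2)(y-vt)$ with speed $v$ satisfying $(c_1,c_2)(-\infty)=(-1,-1)$; they connect $(-1,-1)$ to $(-2v-1,-6v-1)$ and $(-1,-1)$ to $(-6v-1,-2v-1)$, respectively. For $v=0$ the only stationary solution $(c_1,c_2)(y)$ satisfying $(c_1,c_2)(-\infty)=(-1,-1)$ is the constant $(c_1,c_2)\equiv(-1,-1)$. For $v>0$ there are no non-constant traveling waves with speed $v$ satisfying $(c_1,c_2)(-\infty)=(-1,-1)$. (B) For every $v>0$ there exist exactly two (up to translation) traveling wave solutions $(c_1,c_2)(y-vt)$ with speed $v$ satisfying $(c_1,c_2)(+\infty)=(1,1)$; they connect $(-2v+1,-6v+1)$ to $(1,1)$ and $(-6v+1,-2v+1)$ to $(1,1)$, respectively. For $v=0$ the only stationary solution $(c_1,c_2)(y)$ satisfying $(c_1,c_2)(+\infty)=(1,1)$ is the constant $(c_1,c_2)\equiv(1,1)$. For $v<0$ there are no non-constant traveling waves with speed $v$ satisfying $(c_1,c_2)(+\infty)=(1,1)$.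
   Context: Two-tubes TFE equations: unknowns $c_1,c_2$, real functions of $(t,y)\in[0,\infty)\times\mathbb{R}$, satisfying $$\partial_t c_1+\partial_y(u_1c_1)-\partial_{yy}c_1=-f,\qquad \partial_t c_2+\partial_y(u_2c_2)-\partial_{yy}c_2=f,$$ with $u_1=(c_2-c_1)/2$, $u_2=-u_1$, and $f=-(\partial_y u_1)\,c_1$ if $\partial_y u_1\le 0$, $f=-(\partial_y u_1)\,c_2$ if $\partial_y u_1\ge0$. A traveling wave with speed $v$ is a solution of the form $(c_1,c_2)(t,y)=\tilde g(y-vt)$ with $\tilde g:\mathbb{R}\to\mathbb{R}^2$ continuous (and smooth enough to solve the equations classically) having limits $\tilde g(\pm\infty)$; it connects $\tilde g(-\infty)$ to $\tilde g(+\infty)$. *)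

(* Defs.v *)
From Stdlib Require Import Reals.
From Coquelicot Require Import Coquelicot.
Open Scope R_scope.

(* Source term f, as a function of d = du1/dy and of (c1, c2):
   f = -d*c1 if d <= 0, f = -d*c2 if d >= 0 (both agree at d = 0). *)
Definition fTFE (d c1 c2 : R) : R :=
  if Rle_dec d 0 then - d * c1 else - d * c2.

Definition u1_of (g1 g2 : R -> R) : R -> R := fun z => (g2 z - g1 z) / 2.

(* (g1,g2) is the profile of a classical traveling wave with speed v:
   (c1,c2)(t,y) = (g1,g2)(y - v t) solves the two-tubes TFE equations.
   Substituting xi = y - v t, this amounts to the profile ODEs
     -v g1' + (u1 g1)' - g1'' = -f,   -v g2' + (u2 g2)' - g2'' = f,
   with u2 = -u1; profiles are twice differentiable and have finite limits
   at -oo and +oo. *)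
Definition is_TW (v : R) (g1 g2 : R -> R) : Prop :=
  (forall x, ex_derive g1 x) /\ (forall x, ex_derive g2 x) /\
  (forall x, ex_derive (Derive g1) x) /\ (forall x, ex_derive (Derive g2) x) /\
  (exists a1 a2 b1 b2 : R,
      is_lim g1 m_infty a1 /\ is_lim g2 m_infty a2 /\
      is_lim g1 p_infty b1 /\ is_lim g2 p_infty b2) /\
  (forall x,
      - v * Derive g1 x + Derive (fun z => u1_of g1 g2 z * g1 z) x
        - Derive_n g1 2 x
      = - fTFE (Derive (u1_of g1 g2) x) (g1 x) (g2 x)) /\
  (forall x,
      - v * Derive g2 x + Derive (fun z => - u1_of g1 g2 z * g2 z) x
        - Derive_n g2 2 x
      = fTFE (Derive (u1_of g1 g2) x) (g1 x) (g2 x)).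

Definition lim_left (g1 g2 : R -> R) (a1 a2 : R) : Prop :=
  is_lim g1 m_infty a1 /\ is_lim g2 m_infty a2.
Definition lim_right (g1 g2 : R -> R) (b1 b2 : R) : Prop :=
  is_lim g1 p_infty b1 /\ is_lim g2 p_infty b2.

Definition profile_const (g1 g2 : R -> R) : Prop :=
  exists a1 a2 : R, forall x, g1 x = a1 /\ g2 x = a2.

Definition profile_translate (g1 g2 h1 h2 : R -> R) : Prop :=
  exists s : R, forall x, g1 x = h1 (x + s) /\ g2 x = h2 (x + s).

(* Main.v *)
Require Import Defs.
From Stdlib Require Import Reals.
From Coquelicot Require Import Coquelicot.
Open Scope R_scope.
From Stdlib Require Import Lra Psatz Classical.

Definition limm (f : R -> R) (a : R) : Prop :=
  forall eps, 0 < eps -> exists M, forall x, x < M -> Rabs (f x - a) < eps.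
Definition limp (f : R -> R) (a : R) : Prop :=
  forall eps, 0 < eps -> exists M, forall x, M < x -> Rabs (f x - a) < eps.

Lemma limm_of (f : R -> R) (a : R) : is_lim f m_infty a -> limm f a.
Proof.
  intros H eps He. apply is_lim_spec in H. cbn in H. exact (H (mkposreal eps He)).
Qed.
Lemma limp_of (f : R -> R) (a : R) : is_lim f p_infty a -> limp f a.
Proof.
  intros H eps He. apply is_lim_spec in H. cbn in H. exact (H (mkposreal eps He)).
Qed.
Lemma of_limm (f : R -> R) (a : R) : limm f a -> is_lim f m_infty a.
Proof.
  intros H. apply is_lim_spec. cbn. intros [eps He]. exact (H eps He).
Qed.
Lemma of_limp (f : R -> R) (a : R) : limp f a -> is_lim f p_infty a.
Proof.
  intros H. apply is_lim_spec. cbn. intros [eps He]. exact (H eps He).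
Qed.

Lemma cont_of_derive f x l : is_derive f x l -> continuity_pt f x.
Proof.
  intros H. apply continuity_pt_filterlim.
  apply (ex_derive_continuous f x). exists l; exact H.
Qed.

Lemma MVT' (f df : R -> R) a b : (forall x, is_derive f x (df x)) -> a <= b ->
  exists c, a <= c <= b /\ f b - f a = df c * (b - a).
Proof.
  intros Hd Hab.
  destruct (MVT_gen f a b df) as [c [Hc HE]].
  - intros; apply Hd.
  - intros; eapply cont_of_derive; apply Hd.
  - exists c. rewrite Rmin_left in Hc by lra. rewrite Rmax_right in Hc by lra.
    split; auto.
Qed.

Lemma mono_lin_ge (f df : R -> R) a b k : (forall x, is_derive f x (df x)) -> a <= b ->
  (forall x, a <= x <= b -> k <= df x) -> k * (b - a) <= f b - f a.
Proof.
  intros Hd Hab Hk. destruct (MVT' f df a b Hd Hab) as [c [Hc HE]].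
  rewrite HE. specialize (Hk c Hc). nra.
Qed.
Lemma mono_lin_le (f df : R -> R) a b k : (forall x, is_derive f x (df x)) -> a <= b ->
  (forall x, a <= x <= b -> df x <= k) -> f b - f a <= k * (b - a).
Proof.
  intros Hd Hab Hk. destruct (MVT' f df a b Hd Hab) as [c [Hc HE]].
  rewrite HE. specialize (Hk c Hc). nra.
Qed.
Lemma mono_ge (f df : R -> R) a b : (forall x, is_derive f x (df x)) -> a <= b ->
  (forall x, a <= x <= b -> 0 <= df x) -> f a <= f b.
Proof. intros Hd Hab Hk. pose proof (mono_lin_ge f df a b 0 Hd Hab Hk). lra. Qed.
Lemma mono_le (f df : R -> R) a b : (forall x, is_derive f x (df x)) -> a <= b ->
  (forall x, a <= x <= b -> df x <= 0) -> f b <= f a.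
Proof. intros Hd Hab Hk. pose proof (mono_lin_le f df a b 0 Hd Hab Hk). lra. Qed.
Lemma mono_gt (f df : R -> R) a b : (forall x, is_derive f x (df x)) -> a < b ->
  (forall x, a <= x <= b -> 0 < df x) -> f a < f b.
Proof.
  intros Hd Hab Hk. destruct (MVT' f df a b Hd (Rlt_le _ _ Hab)) as [c [Hc HE]].
  specialize (Hk c Hc). nra.
Qed.

Lemma const_of_derive0 (f df : R -> R) : (forall x, is_derive f x (df x)) ->
  (forall x, df x = 0) -> forall x y, f x = f y.
Proof.
  intros Hd H0 x y.
  assert (forall a b, a <= b -> f a = f b).
  { intros a b Hab. pose proof (mono_ge f df a b Hd Hab) as H1.
    pose proof (mono_le f df a b Hd Hab) as H2.
    assert (f a <= f b) by (apply H1; intros; rewrite H0; lra).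
    assert (f b <= f a) by (apply H2; intros; rewrite H0; lra). lra. }
  destruct (Rle_dec x y); [apply H; lra| symmetry; apply H; lra].
Qed.

Lemma growp (f df : R -> R) a y k : (forall x, is_derive f x (df x)) -> limp f a ->
  0 < k -> (forall x, y <= x -> k <= df x) -> False.
Proof.
  intros Hd Hl Hk Hx. destruct (Hl 1 ltac:(lra)) as [M HM].
  set (x1 := Rmax y M + 1).
  assert (Hy1 : y <= x1) by (unfold x1; pose proof (Rmax_l y M); lra).
  set (x2 := x1 + 3 / k).
  assert (k * (x2 - x1) <= f x2 - f x1).
  { apply (mono_lin_ge f df); auto. unfold x2; apply Rlt_le.
    assert (0 < 3/k) by (apply Rdiv_lt_0_compat; lra). lra.
    intros; apply Hx; lra. }
  assert (k * (x2 - x1) = 3) by (unfold x2; field; lra).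
  assert (M < x1) by (unfold x1; pose proof (Rmax_r y M); lra).
  assert (M < x2) by (unfold x2; assert (0 < 3/k) by (apply Rdiv_lt_0_compat; lra); lra).
  pose proof (HM x1 H1). pose proof (HM x2 H2).
  apply Rabs_def2 in H3. apply Rabs_def2 in H4. lra.
Qed.

Lemma growp_neg (f df : R -> R) a y k : (forall x, is_derive f x (df x)) -> limp f a ->
  0 < k -> (forall x, y <= x -> df x <= - k) -> False.
Proof.
  intros Hd Hl Hk Hx.
  apply (growp (fun x => - f x) (fun x => - df x) (- a) y k).
  - intros x. apply (is_derive_opp f x (df x)). apply Hd.
  - intros eps He. destruct (Hl eps He) as [M HM]. exists M. intros x Hx'.
    specialize (HM x Hx'). rewrite <- Rabs_Ropp. replace (- (- f x - - a)) with (f x - a) by ring. auto.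
  - auto.
  - intros x Hx'. specialize (Hx x Hx'). lra.
Qed.

Lemma growm (f df : R -> R) a y k : (forall x, is_derive f x (df x)) -> limm f a ->
  0 < k -> (forall x, x <= y -> k <= df x) -> False.
Proof.
  intros Hd Hl Hk Hx. destruct (Hl 1 ltac:(lra)) as [M HM].
  set (x1 := Rmin y M - 1).
  assert (Hy1 : x1 <= y) by (unfold x1; pose proof (Rmin_l y M); lra).
  set (x2 := x1 - 3 / k).
  assert (k * (x1 - x2) <= f x1 - f x2).
  { apply (mono_lin_ge f df); auto. unfold x2; apply Rlt_le.
    assert (0 < 3/k) by (apply Rdiv_lt_0_compat; lra). lra.
    intros; apply Hx; lra. }
  assert (k * (x1 - x2) = 3) by (unfold x2; field; lra).
  assert (x1 < M) by (unfold x1; pose proof (Rmin_r y M); lra).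
  assert (x2 < M) by (unfold x2; assert (0 < 3/k) by (apply Rdiv_lt_0_compat; lra); lra).
  pose proof (HM x1 H1). pose proof (HM x2 H2).
  apply Rabs_def2 in H3. apply Rabs_def2 in H4. lra.
Qed.

Lemma growm_neg (f df : R -> R) a y k : (forall x, is_derive f x (df x)) -> limm f a ->
  0 < k -> (forall x, x <= y -> df x <= - k) -> False.
Proof.
  intros Hd Hl Hk Hx.
  apply (growm (fun x => - f x) (fun x => - df x) (- a) y k).
  - intros x. apply (is_derive_opp f x (df x)). apply Hd.
  - intros eps He. destruct (Hl eps He) as [M HM]. exists M. intros x Hx'.
    specialize (HM x Hx'). rewrite <- Rabs_Ropp. replace (- (- f x - - a)) with (f x - a) by ring. auto.
  - auto.
  - intros x Hx'. specialize (Hx x Hx'). lra.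
Qed.

Lemma no_sign_change (g dg : R -> R) x y : (forall t, is_derive g t (dg t)) -> x <= y ->
  (forall t, x <= t <= y -> g t <> 0) -> 0 < g x * g y.
Proof.
  intros Hd Hxy Hnz. destruct (Rlt_le_dec 0 (g x * g y)) as [H|H]; auto.
  exfalso. destruct (IVT_cor g x y) as [z [Hz Hz0]]; auto.
  intros t. eapply cont_of_derive; apply Hd.
  apply (Hnz z Hz Hz0).
Qed.

Lemma is_derive_mul_exp (phi : R -> R) d c t : is_derive phi t d ->
  is_derive (fun s => phi s * exp (c * s)) t (d * exp (c * t) + phi t * (c * exp (c * t))).
Proof.
  intros H.
  assert (He : is_derive (fun s => exp (c * s)) t (c * exp (c * t))).
  { auto_derive; auto; ring. }
  pose proof (is_derive_mult phi (fun s => exp (c * s)) t d (c * exp (c * t)) H He) as HH.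
  simpl in HH. apply HH. intros; apply Rmult_comm.
Qed.

Lemma gronwall_fwd (phi dphi : R -> R) K y : (forall x, is_derive phi x (dphi x)) ->
  (forall x, 0 <= phi x) -> (forall x, y <= x -> dphi x <= K * phi x) -> phi y = 0 ->
  forall x, y <= x -> phi x = 0.
Proof.
  intros Hd Hp HK H0 x Hx.
  pose (psi := fun s => phi s * exp (- K * s)).
  pose (dpsi := fun s => dphi s * exp (- K * s) + phi s * (- K * exp (- K * s))).
  assert (Hd' : forall s, is_derive psi s (dpsi s)).
  { intros s. apply is_derive_mul_exp. apply Hd. }
  assert (psi x <= psi y).
  { apply (mono_le psi dpsi); auto. intros s Hs. unfold dpsi.
    specialize (HK s (proj1 Hs)). pose proof (exp_pos (- K * s)). nra. }
  unfold psi in H. rewrite H0 in H. pose proof (exp_pos (- K * x)). specialize (Hp x). nra.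
Qed.

Lemma gronwall_bwd (phi dphi : R -> R) K y : (forall x, is_derive phi x (dphi x)) ->
  (forall x, 0 <= phi x) -> (forall x, x <= y -> - K * phi x <= dphi x) -> phi y = 0 ->
  forall x, x <= y -> phi x = 0.
Proof.
  intros Hd Hp HK H0 x Hx.
  pose (psi := fun s => phi s * exp (K * s)).
  pose (dpsi := fun s => dphi s * exp (K * s) + phi s * (K * exp (K * s))).
  assert (Hd' : forall s, is_derive psi s (dpsi s)).
  { intros s. apply is_derive_mul_exp. apply Hd. }
  assert (psi x <= psi y).
  { apply (mono_ge psi dpsi); auto. intros s Hs. unfold dpsi.
    specialize (HK s (proj2 Hs)). pose proof (exp_pos (K * s)). nra. }
  unfold psi in H. rewrite H0 in H. pose proof (exp_pos (K * x)). specialize (Hp x). nra.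
Qed.

Lemma gronwall (phi dphi : R -> R) K y : (forall x, is_derive phi x (dphi x)) ->
  (forall x, 0 <= phi x) -> (forall x, Rabs (dphi x) <= K * phi x) -> phi y = 0 ->
  forall x, phi x = 0.
Proof.
  intros Hd Hp HK H0 x.
  destruct (Rle_dec y x).
  - apply (gronwall_fwd phi dphi K y); auto. intros s _. specialize (HK s).
    apply Rabs_le_between in HK. lra.
  - apply (gronwall_bwd phi dphi K y); auto; [|lra]. intros s _. specialize (HK s).
    apply Rabs_le_between in HK. lra.
Qed.

Lemma bounded_of_lims (f : R -> R) (a b : R) : (forall x, continuity_pt f x) ->
  limm f a -> limp f b -> exists B, forall x, Rabs (f x) <= B.
Proof.
  intros Hc Ha Hb. destruct (Ha 1 ltac:(lra)) as [M1 HM1]. destruct (Hb 1 ltac:(lra)) as [M2 HM2].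
  set (M3 := Rmax M1 M2).
  assert (HM13 : M1 <= M3) by apply Rmax_l.
  destruct (continuity_ab_maj f M1 M3 HM13 (fun c _ => Hc c)) as [xM [HxM _]].
  destruct (continuity_ab_min f M1 M3 HM13 (fun c _ => Hc c)) as [xm [Hxm _]].
  exists (Rabs a + 1 + Rabs b + 1 + Rabs (f xM) + Rabs (f xm)).
  intros x. pose proof (Rabs_pos a). pose proof (Rabs_pos b). pose proof (Rabs_pos (f xM)). pose proof (Rabs_pos (f xm)).
  destruct (Rlt_le_dec x M1) as [Hx1|Hx1].
  - specialize (HM1 x Hx1). pose proof (Rabs_triang_inv (f x) a). lra.
  - destruct (Rlt_le_dec M2 x) as [Hx2|Hx2].
    + specialize (HM2 x Hx2). pose proof (Rabs_triang_inv (f x) b). lra.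
    + assert (HI : M1 <= x <= M3) by (split; auto; unfold M3; pose proof (Rmax_r M1 M2); lra).
      specialize (HxM x HI). specialize (Hxm x HI).
      apply Rabs_le. pose proof (Rle_abs (f xM)). pose proof (proj1 (Rabs_le_between (f xm) (Rabs (f xm))) (Rle_refl _)). lra.
Qed.

Lemma deriv_at_max (f : R -> R) xi l : is_derive f xi l -> (forall x, f x <= f xi) -> l = 0.
Proof.
  intros Hd Hm. apply is_derive_Reals in Hd.
  destruct (Rtotal_order l 0) as [Hl|[Hl|Hl]]; auto; exfalso.
  - destruct (Hd (- l / 2) ltac:(lra)) as [[d Hdp] Hdd]. simpl in Hdd.
    assert (Hh : - (d/2) <> 0) by lra.
    assert (Hh2 : Rabs (- (d/2)) < d) by (rewrite Rabs_Ropp, Rabs_right; lra).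
    specialize (Hdd _ Hh Hh2). apply Rabs_def2 in Hdd. destruct Hdd as [Hq1 Hq2].
    specialize (Hm (xi + - (d/2))).
    assert (Hq : (f (xi + - (d / 2)) - f xi) / - (d / 2) < 0) by lra.
    assert ((f (xi + - (d / 2)) - f xi) / - (d / 2) = (f xi - f (xi + - (d / 2))) / (d/2)) by (field; lra).
    rewrite H in Hq. assert (0 <= (f xi - f (xi + - (d / 2))) / (d/2)).
    { apply Rdiv_le_0_compat; lra. } lra.
  - destruct (Hd (l / 2) ltac:(lra)) as [[d Hdp] Hdd]. simpl in Hdd.
    assert (Hh : (d/2) <> 0) by lra.
    assert (Hh2 : Rabs (d/2) < d) by (rewrite Rabs_right; lra).
    specialize (Hdd _ Hh Hh2). apply Rabs_def2 in Hdd. destruct Hdd as [Hq1 Hq2].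
    specialize (Hm (xi + (d/2))).
    assert (Hq : 0 < (f (xi + (d / 2)) - f xi) / (d / 2)) by lra.
    assert ((f (xi + (d / 2)) - f xi) / (d / 2) <= 0).
    { unfold Rdiv. apply Rmult_le_0_r; [lra| apply Rlt_le, Rinv_0_lt_compat; lra]. } lra.
Qed.

Lemma max_second (f df ddf : R -> R) xi : (forall x, is_derive f x (df x)) ->
  (forall x, is_derive df x (ddf x)) -> (forall x, f x <= f xi) -> 0 < ddf xi -> False.
Proof.
  intros Hd Hdd Hm Hp.
  assert (H0 : df xi = 0) by (apply (deriv_at_max f xi); auto).
  pose proof (Hdd xi) as Hx. apply is_derive_Reals in Hx.
  destruct (Hx (ddf xi / 2) ltac:(lra)) as [[d Hdp] Hq]. simpl in Hq.
  assert (Hpos : forall h, 0 < h < d -> 0 < df (xi + h)).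
  { intros h Hh. assert (h <> 0) by lra. assert (Rabs h < d) by (rewrite Rabs_right; lra).
    specialize (Hq h H H1). rewrite H0 in Hq. apply Rabs_def2 in Hq.
    assert (0 < (df (xi + h) - 0) / h) by lra.
    replace ((df (xi + h) - 0) / h) with (df (xi + h) / h) in H2 by (unfold Rdiv; ring).
    apply Rdiv_pos_cases in H2. destruct H2 as [[A B]|[A B]]; lra. }
  assert (f xi <= f (xi + d/4)).
  { apply (mono_ge f df); auto; [lra|]. intros x Hx'.
    destruct (Req_dec x xi) as [->|Hne]; [lra|].
    replace x with (xi + (x - xi)) by ring. apply Rlt_le, Hpos. lra. }
  assert (f (xi + d/4) < f (xi + d/2)).
  { apply (mono_gt f df); auto; [lra|]. intros x Hx'.
    replace x with (xi + (x - xi)) by ring. apply Hpos. lra. }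
  specialize (Hm (xi + d/2)). lra.
Qed.

Lemma global_max (u : R -> R) x1 : (forall x, continuity_pt u x) -> limm u 0 -> 0 < u x1 ->
  (forall x, x1 <= x -> u x <= u x1) -> exists xi, forall x, u x <= u xi.
Proof.
  intros Hc Hl Hp Ht. destruct (Hl (u x1) Hp) as [M HM].
  set (L := Rmin M x1). assert (HL : L <= x1) by apply Rmin_r.
  destruct (continuity_ab_maj u L x1 HL (fun c _ => Hc c)) as [xi [Hxi Hxi2]].
  exists xi. intros x.
  assert (u x1 <= u xi) by (apply Hxi; lra).
  destruct (Rlt_le_dec x L).
  - assert (x < M) by (pose proof (Rmin_l M x1); unfold L in *; lra).
    specialize (HM x H0). apply Rabs_def2 in HM. lra.
  - destruct (Rle_dec x x1). apply Hxi; lra. specialize (Ht x ltac:(lra)). lra.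
Qed.

Definition TWE (v : R) (w z w1 z1 w2 z2 : R -> R) : Prop :=
  (forall x, is_derive w x (w1 x)) /\ (forall x, is_derive z x (z1 x)) /\
  (forall x, is_derive w1 x (w2 x)) /\ (forall x, is_derive z1 x (z2 x)) /\
  (forall x, w2 x = ((z x - w x)/2 - v) * w1 x - 2 * ((z x - w x)/2) * Rmax ((z1 x - w1 x)/2) 0) /\
  (forall x, z2 x = - (v + (z x - w x)/2) * z1 x - 2 * ((z x - w x)/2) * Rmin ((z1 x - w1 x)/2) 0).

Lemma Derive_eq (f df : R -> R) x : is_derive f x (df x) -> Derive (fun y => f y) x = df x.
Proof. intros H. apply is_derive_unique. exact H. Qed.

Lemma TWE_of_TW v g1 g2 : is_TW v g1 g2 ->
  TWE v g1 g2 (Derive g1) (Derive g2) (Derive (Derive g1)) (Derive (Derive g2)).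
Proof.
  intros [H1 [H2 [H3 [H4 [_ [E1 E2]]]]]].
  assert (D1 : forall x, is_derive g1 x (Derive g1 x)) by (intros; apply Derive_correct; auto).
  assert (D2 : forall x, is_derive g2 x (Derive g2 x)) by (intros; apply Derive_correct; auto).
  assert (D3 : forall x, is_derive (Derive g1) x (Derive (Derive g1) x)) by (intros; apply Derive_correct; auto).
  assert (D4 : forall x, is_derive (Derive g2) x (Derive (Derive g2) x)) by (intros; apply Derive_correct; auto).
  refine (conj D1 (conj D2 (conj D3 (conj D4 _)))).
  assert (Hu : forall x, Derive (u1_of g1 g2) x = (Derive g2 x - Derive g1 x)/2).
  { intros x. apply is_derive_unique. unfold u1_of. auto_derive.
    - repeat split; auto.
    - rewrite (Derive_eq g1 (Derive g1)), (Derive_eq g2 (Derive g2)); auto. field. }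
  assert (Hp1 : forall x, Derive (fun z => u1_of g1 g2 z * g1 z) x =
     (Derive g2 x - Derive g1 x)/2 * g1 x + (g2 x - g1 x)/2 * Derive g1 x).
  { intros x. apply is_derive_unique. unfold u1_of. auto_derive.
    - repeat split; auto.
    - rewrite (Derive_eq g1 (Derive g1)), (Derive_eq g2 (Derive g2)); auto. field. }
  assert (Hp2 : forall x, Derive (fun z => - u1_of g1 g2 z * g2 z) x =
     - ((Derive g2 x - Derive g1 x)/2 * g2 x + (g2 x - g1 x)/2 * Derive g2 x)).
  { intros x. apply is_derive_unique. unfold u1_of. auto_derive.
    - repeat split; auto.
    - rewrite (Derive_eq g1 (Derive g1)), (Derive_eq g2 (Derive g2)); auto. field. }
  split; intros x; specialize (E1 x); specialize (E2 x);
  rewrite Hu, Hp1 in E1; rewrite Hu, Hp2 in E2; simpl in E1, E2; unfold fTFE in E1, E2;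
  change (Derive (fun x => Derive (fun x0 => g1 x0) x) x) with (Derive (Derive g1) x) in E1;
  change (Derive (fun x => Derive (fun x0 => g2 x0) x) x) with (Derive (Derive g2) x) in E2;
  destruct (Rle_dec ((Derive g2 x - Derive g1 x) / 2) 0) as [Hd|Hd].
  - rewrite Rmax_right by lra. nra.
  - rewrite Rmax_left by lra. nra.
  - rewrite Rmin_left by lra. nra.
  - rewrite Rmin_right by lra. nra.
Qed.

Lemma TW_of_TWE v g1 g2 w1 z1 w2 z2 (a1 a2 b1 b2 : R) : TWE v g1 g2 w1 z1 w2 z2 ->
  is_lim g1 m_infty a1 -> is_lim g2 m_infty a2 -> is_lim g1 p_infty b1 -> is_lim g2 p_infty b2 ->
  is_TW v g1 g2.
Proof.
  intros [D1 [D2 [D3 [D4 [E1 E2]]]]] L1 L2 L3 L4.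
  assert (Q1 : forall x, Derive g1 x = w1 x) by (intros; apply is_derive_unique; auto).
  assert (Q2 : forall x, Derive g2 x = z1 x) by (intros; apply is_derive_unique; auto).
  assert (Q3 : forall x, Derive (Derive g1) x = w2 x).
  { intros x. rewrite (Derive_ext (Derive g1) w1 x Q1). apply is_derive_unique; auto. }
  assert (Q4 : forall x, Derive (Derive g2) x = z2 x).
  { intros x. rewrite (Derive_ext (Derive g2) z1 x Q2). apply is_derive_unique; auto. }
  split; [intros x; exists (w1 x); auto|].
  split; [intros x; exists (z1 x); auto|].
  split; [intros x; apply (ex_derive_ext w1); [intros; symmetry; auto| exists (w2 x); auto]|].
  split; [intros x; apply (ex_derive_ext z1); [intros; symmetry; auto| exists (z2 x); auto]|].
  split; [exists a1, a2, b1, b2; repeat split; auto|].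
  assert (Hu : forall x, Derive (u1_of g1 g2) x = (z1 x - w1 x)/2).
  { intros x. apply is_derive_unique. unfold u1_of. auto_derive.
    - repeat split; [exists (z1 x)|exists (w1 x)]; auto.
    - rewrite (Derive_eq g1 w1), (Derive_eq g2 z1); auto. field. }
  assert (Hp1 : forall x, Derive (fun z => u1_of g1 g2 z * g1 z) x =
     (z1 x - w1 x)/2 * g1 x + (g2 x - g1 x)/2 * w1 x).
  { intros x. apply is_derive_unique. unfold u1_of. auto_derive.
    - repeat split; [exists (z1 x)|exists (w1 x)|exists (w1 x)]; auto.
    - rewrite (Derive_eq g1 w1), (Derive_eq g2 z1); auto. field. }
  assert (Hp2 : forall x, Derive (fun z => - u1_of g1 g2 z * g2 z) x =
     - ((z1 x - w1 x)/2 * g2 x + (g2 x - g1 x)/2 * z1 x)).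
  { intros x. apply is_derive_unique. unfold u1_of. auto_derive.
    - repeat split; [exists (z1 x)|exists (w1 x)|exists (z1 x)]; auto.
    - rewrite (Derive_eq g1 w1), (Derive_eq g2 z1); auto. field. }
  split; intros x; rewrite Hu; [rewrite Hp1|rewrite Hp2];
  [change (Derive_n g1 2 x) with (Derive (Derive g1) x)|change (Derive_n g2 2 x) with (Derive (Derive g2) x)];
  rewrite ?Q1, ?Q2, ?Q3, ?Q4; specialize (E1 x); specialize (E2 x); unfold fTFE;
  destruct (Rle_dec ((z1 x - w1 x) / 2) 0) as [Hd|Hd].
  - rewrite Rmax_right in E1 by lra. nra.
  - rewrite Rmax_left in E1 by lra. nra.
  - rewrite Rmin_left in E2 by lra. nra.
  - rewrite Rmin_right in E2 by lra. nra.
Qed.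

Lemma TWE_swap v w z w1 z1 w2 z2 : TWE v w z w1 z1 w2 z2 -> TWE v z w z1 w1 z2 w2.
Proof.
  intros [D1 [D2 [D3 [D4 [E1 E2]]]]].
  do 4 (split; auto). split; intros x.
  - rewrite E2. replace ((w1 x - z1 x)/2) with (- ((z1 x - w1 x)/2)) by field.
    destruct (Rle_dec ((z1 x - w1 x) / 2) 0).
    + rewrite Rmin_left by lra. rewrite Rmax_left by lra. field.
    + rewrite Rmin_right by lra. rewrite Rmax_right by lra. field.
  - rewrite E1. replace ((w1 x - z1 x)/2) with (- ((z1 x - w1 x)/2)) by field.
    destruct (Rle_dec ((z1 x - w1 x) / 2) 0).
    + rewrite Rmin_right by lra. rewrite Rmax_right by lra. field.
    + rewrite Rmin_left by lra. rewrite Rmax_left by lra. field.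
Qed.

Lemma is_derive_refl (f df : R -> R) x : (forall t, is_derive f t (df t)) ->
  is_derive (fun t => - f (- t)) x (df (- x)).
Proof.
  intros H.
  pose proof (is_derive_comp f (fun t => - t) x (df (- x)) (-1) (H (- x))) as HH.
  assert (Ho : is_derive (fun t : R => - t) x (-1)) by (auto_derive; auto; ring).
  specialize (HH Ho). apply is_derive_opp in HH.
  replace (df (- x)) with (- (-1 * df (- x))) by ring. exact HH.
Qed.

Lemma is_derive_refl2 (f df : R -> R) x : (forall t, is_derive f t (df t)) ->
  is_derive (fun t => f (- t)) x (- df (- x)).
Proof.
  intros H.
  pose proof (is_derive_refl f df x H) as HH. apply is_derive_opp in HH.
  eapply is_derive_ext; [|exact HH]. intros t. simpl. unfold opp; simpl. ring.
Qed.

Lemma TWE_refl v w z w1 z1 w2 z2 : TWE v w z w1 z1 w2 z2 ->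
  TWE (- v) (fun x => - w (- x)) (fun x => - z (- x)) (fun x => w1 (- x)) (fun x => z1 (- x))
      (fun x => - w2 (- x)) (fun x => - z2 (- x)).
Proof.
  intros [D1 [D2 [D3 [D4 [E1 E2]]]]].
  split; [intros x; apply (is_derive_refl w w1); auto|].
  split; [intros x; apply (is_derive_refl z z1); auto|].
  split; [intros x; apply (is_derive_refl2 w1 w2); auto|].
  split; [intros x; apply (is_derive_refl2 z1 z2); auto|].
  split; intros x; [rewrite E1|rewrite E2];
  replace ((- z (- x) - - w (- x)) / 2) with (- ((z (- x) - w (- x)) / 2)) by field.
  - rewrite Rmax_comm. rewrite Rmax_comm. ring.
  - ring.
Qed.

Lemma exd_of (f df : R -> R) x : (forall t, is_derive f t (df t)) -> ex_derive (fun y => f y) x.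
Proof. intros H. exists (df x). apply H. Qed.

Lemma limm_lin (f g : R -> R) (a b al be : R) : limm f a -> limm g b ->
  limm (fun x => al * f x + be * g x) (al * a + be * b).
Proof.
  intros Hf Hg eps He.
  set (d := eps / (2 * (Rabs al + Rabs be + 1))).
  assert (Hd : 0 < d) by (unfold d; apply Rdiv_lt_0_compat; [lra|]; pose proof (Rabs_pos al); pose proof (Rabs_pos be); lra).
  destruct (Hf d Hd) as [M1 H1]. destruct (Hg d Hd) as [M2 H2].
  exists (Rmin M1 M2). intros x Hx.
  assert (x < M1) by (pose proof (Rmin_l M1 M2); lra).
  assert (x < M2) by (pose proof (Rmin_r M1 M2); lra).
  specialize (H1 x H). specialize (H2 x H0).
  replace (al * f x + be * g x - (al * a + be * b)) with (al * (f x - a) + be * (g x - b)) by ring.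
  eapply Rle_lt_trans; [apply Rabs_triang|]. rewrite !Rabs_mult.
  assert (Rabs al * Rabs (f x - a) <= Rabs al * d) by (apply Rmult_le_compat_l; [apply Rabs_pos| lra]).
  assert (Rabs be * Rabs (g x - b) <= Rabs be * d) by (apply Rmult_le_compat_l; [apply Rabs_pos| lra]).
  assert ((Rabs al + Rabs be) * d < eps).
  { assert (d * (Rabs al + Rabs be + 1) = eps / 2).
    { unfold d. field. pose proof (Rabs_pos al); pose proof (Rabs_pos be). lra. }
    nra. }
  lra.
Qed.

Lemma limp_lin (f g : R -> R) (a b al be : R) : limp f a -> limp g b ->
  limp (fun x => al * f x + be * g x) (al * a + be * b).
Proof.
  intros Hf Hg eps He.
  set (d := eps / (2 * (Rabs al + Rabs be + 1))).
  assert (Hd : 0 < d) by (unfold d; apply Rdiv_lt_0_compat; [lra|]; pose proof (Rabs_pos al); pose proof (Rabs_pos be); lra).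
  destruct (Hf d Hd) as [M1 H1]. destruct (Hg d Hd) as [M2 H2].
  exists (Rmax M1 M2). intros x Hx.
  assert (M1 < x) by (pose proof (Rmax_l M1 M2); lra).
  assert (M2 < x) by (pose proof (Rmax_r M1 M2); lra).
  specialize (H1 x H). specialize (H2 x H0).
  replace (al * f x + be * g x - (al * a + be * b)) with (al * (f x - a) + be * (g x - b)) by ring.
  eapply Rle_lt_trans; [apply Rabs_triang|]. rewrite !Rabs_mult.
  assert (Rabs al * Rabs (f x - a) <= Rabs al * d) by (apply Rmult_le_compat_l; [apply Rabs_pos| lra]).
  assert (Rabs be * Rabs (g x - b) <= Rabs be * d) by (apply Rmult_le_compat_l; [apply Rabs_pos| lra]).
  assert ((Rabs al + Rabs be) * d < eps).
  { assert (d * (Rabs al + Rabs be + 1) = eps / 2).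
    { unfold d. field. pose proof (Rabs_pos al); pose proof (Rabs_pos be). lra. }
    nra. }
  lra.
Qed.

Lemma limm_ext (f g : R -> R) (a : R) : (forall x, f x = g x) -> limm f a -> limm g a.
Proof. intros E H eps He. destruct (H eps He) as [M HM]. exists M. intros x Hx. rewrite <- E. auto. Qed.
Lemma limp_ext (f g : R -> R) (a : R) : (forall x, f x = g x) -> limp f a -> limp g a.
Proof. intros E H eps He. destruct (H eps He) as [M HM]. exists M. intros x Hx. rewrite <- E. auto. Qed.

Lemma limm_sq (f : R -> R) (a : R) : limm f a -> limm (fun x => f x * f x) (a * a).
Proof.
  intros H eps He.
  set (d := Rmin 1 (eps / (2 * Rabs a + 2))).
  assert (Hd : 0 < d) by (unfold d; apply Rmin_pos; [lra| apply Rdiv_lt_0_compat; [lra|pose proof (Rabs_pos a); lra]]).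
  destruct (H d Hd) as [M HM]. exists M. intros x Hx. specialize (HM x Hx).
  replace (f x * f x - a * a) with ((f x - a) * ((f x - a) + 2 * a)) by ring.
  rewrite Rabs_mult. 
  assert (Rabs (f x - a + 2 * a) <= 2 * Rabs a + 1).
  { eapply Rle_trans; [apply Rabs_triang|]. rewrite Rabs_mult, (Rabs_right 2) by lra.
    pose proof (Rmin_l 1 (eps / (2 * Rabs a + 2))). fold d in H0. lra. }
  assert (d * (2 * Rabs a + 2) <= eps).
  { pose proof (Rmin_r 1 (eps / (2 * Rabs a + 2))). fold d in H1.
    pose proof (Rabs_pos a).
    apply (Rmult_le_compat_r (2 * Rabs a + 2)) in H1; [|lra].
    replace (eps / (2 * Rabs a + 2) * (2 * Rabs a + 2)) with eps in H1 by (field; lra). lra. }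
  pose proof (Rabs_pos (f x - a)). pose proof (Rabs_pos (f x - a + 2 * a)). nra.
Qed.

Lemma limp_sq (f : R -> R) (a : R) : limp f a -> limp (fun x => f x * f x) (a * a).
Proof.
  intros H eps He.
  set (d := Rmin 1 (eps / (2 * Rabs a + 2))).
  assert (Hd : 0 < d) by (unfold d; apply Rmin_pos; [lra| apply Rdiv_lt_0_compat; [lra|pose proof (Rabs_pos a); lra]]).
  destruct (H d Hd) as [M HM]. exists M. intros x Hx. specialize (HM x Hx).
  replace (f x * f x - a * a) with ((f x - a) * ((f x - a) + 2 * a)) by ring.
  rewrite Rabs_mult. 
  assert (Rabs (f x - a + 2 * a) <= 2 * Rabs a + 1).
  { eapply Rle_trans; [apply Rabs_triang|]. rewrite Rabs_mult, (Rabs_right 2) by lra.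
    pose proof (Rmin_l 1 (eps / (2 * Rabs a + 2))). fold d in H0. lra. }
  assert (d * (2 * Rabs a + 2) <= eps).
  { pose proof (Rmin_r 1 (eps / (2 * Rabs a + 2))). fold d in H1.
    pose proof (Rabs_pos a).
    apply (Rmult_le_compat_r (2 * Rabs a + 2)) in H1; [|lra].
    replace (eps / (2 * Rabs a + 2) * (2 * Rabs a + 2)) with eps in H1 by (field; lra). lra. }
  pose proof (Rabs_pos (f x - a)). pose proof (Rabs_pos (f x - a + 2 * a)). nra.
Qed.

Lemma limm_const_eq (f : R -> R) (a c : R) : (forall x, f x = c) -> limm f a -> c = a.
Proof.
  intros E H. destruct (Req_dec c a) as [|Hne]; auto. exfalso.
  assert (0 < Rabs (c - a)) by (apply Rabs_pos_lt; lra).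
  destruct (H _ H0) as [M HM]. specialize (HM (M - 1) ltac:(lra)). rewrite E in HM. lra.
Qed.

Lemma limp_tail_ge (f : R -> R) (a e : R) : limp f a -> 0 < e -> exists X, forall x, X <= x -> Rabs (f x - a) <= e.
Proof.
  intros H He. destruct (H e He) as [M HM]. exists (M + 1). intros x Hx. apply Rlt_le, HM. lra.
Qed.
Lemma limm_tail_le (f : R -> R) (a e : R) : limm f a -> 0 < e -> exists X, forall x, x <= X -> Rabs (f x - a) <= e.
Proof.
  intros H He. destruct (H e He) as [M HM]. exists (M - 1). intros x Hx. apply Rlt_le, HM. lra.
Qed.

Lemma deriv_lim_m (f df : R -> R) (a l : R) : (forall x, is_derive f x (df x)) -> limm f a -> limm df l -> l = 0.
Proof.
  intros Hd Hf Hl. destruct (Rtotal_order l 0) as [H|[H|H]]; auto; exfalso.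
  - destruct (Hl (- l / 2) ltac:(lra)) as [M HM].
    apply (growm_neg f df a (M - 1) (- l / 2)); auto; [lra|].
    intros x Hx. specialize (HM x ltac:(lra)). apply Rabs_def2 in HM. lra.
  - destruct (Hl (l / 2) ltac:(lra)) as [M HM].
    apply (growm f df a (M - 1) (l / 2)); auto; [lra|].
    intros x Hx. specialize (HM x ltac:(lra)). apply Rabs_def2 in HM. lra.
Qed.

Lemma deriv_lim_p (f df : R -> R) (a l : R) : (forall x, is_derive f x (df x)) -> limp f a -> limp df l -> l = 0.
Proof.
  intros Hd Hf Hl. destruct (Rtotal_order l 0) as [H|[H|H]]; auto; exfalso.
  - destruct (Hl (- l / 2) ltac:(lra)) as [M HM].
    apply (growp_neg f df a (M + 1) (- l / 2)); auto; [lra|].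
    intros x Hx. specialize (HM x ltac:(lra)). apply Rabs_def2 in HM. lra.
  - destruct (Hl (l / 2) ltac:(lra)) as [M HM].
    apply (growp f df a (M + 1) (l / 2)); auto; [lra|].
    intros x Hx. specialize (HM x ltac:(lra)). apply Rabs_def2 in HM. lra.
Qed.

Lemma limm_const (c : R) : limm (fun _ => c) c.
Proof. intros eps He. exists 0. intros. rewrite Rminus_diag, Rabs_R0. auto. Qed.
Lemma limp_const (c : R) : limp (fun _ => c) c.
Proof. intros eps He. exists 0. intros. rewrite Rminus_diag, Rabs_R0. auto. Qed.

Lemma Rmax_Rmin_sum a : Rmax a 0 + Rmin a 0 = a.
Proof. destruct (Rle_dec a 0). rewrite Rmax_right, Rmin_left; lra. rewrite Rmax_left, Rmin_right; lra. Qed.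

Lemma limm_lin' (f g h : R -> R) (a b al be c : R) : limm f a -> limm g b ->
  (forall x, h x = al * f x + be * g x) -> c = al * a + be * b -> limm h c.
Proof. intros Hf Hg E ->. eapply limm_ext; [|apply (limm_lin f g a b al be Hf Hg)]. intros; simpl; auto. Qed.
Lemma limp_lin' (f g h : R -> R) (a b al be c : R) : limp f a -> limp g b ->
  (forall x, h x = al * f x + be * g x) -> c = al * a + be * b -> limp h c.
Proof. intros Hf Hg E ->. eapply limp_ext; [|apply (limp_lin f g a b al be Hf Hg)]. intros; simpl; auto. Qed.
Lemma limm_sq' (f h : R -> R) (a c : R) : limm f a -> (forall x, h x = f x * f x) -> c = a * a -> limm h c.
Proof. intros Hf E ->. eapply limm_ext; [|apply (limm_sq f a Hf)]. intros; simpl; auto. Qed.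
Lemma limp_sq' (f h : R -> R) (a c : R) : limp f a -> (forall x, h x = f x * f x) -> c = a * a -> limp h c.
Proof. intros Hf E ->. eapply limp_ext; [|apply (limp_sq f a Hf)]. intros; simpl; auto. Qed.

Lemma is_derive_val (f : R -> R) x l l' : is_derive f x l -> l = l' -> is_derive f x l'.
Proof. intros H ->; auto. Qed.

Lemma phi_alg (a b u v : R) :
  Rabs (2 * a * ((u - v) * a - 2 * u * Rmax ((b - a) / 2) 0) +
     2 * b * (- (v + u) * b - 2 * u * Rmin ((b - a) / 2) 0) + 2 * v * (a * a + b * b))
  <= 6 * Rabs u * (a * a + b * b).
Proof.
  assert (HY : exists Y, 2 * a * ((u - v) * a - 2 * u * Rmax ((b - a) / 2) 0) +
     2 * b * (- (v + u) * b - 2 * u * Rmin ((b - a) / 2) 0) + 2 * v * (a * a + b * b) = 2 * u * Y /\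
     - 3 * (a * a + b * b) <= Y <= 3 * (a * a + b * b)).
  { destruct (Rle_dec ((b - a) / 2) 0).
    - rewrite Rmax_right, Rmin_left by lra. exists (a * a - 2 * b * b + a * b). split; [field| split; nra].
    - rewrite Rmax_left, Rmin_right by lra. exists (2 * a * a - b * b - a * b). split; [field| split; nra]. }
  destruct HY as [Y [HY1 HY2]]. rewrite HY1. rewrite !Rabs_mult. rewrite (Rabs_right 2) by lra.
  assert (Rabs Y <= 3 * (a * a + b * b)) by (apply Rabs_le; lra).
  pose proof (Rabs_pos u). nra.
Qed.

Section Core.
Variables (v : R) (w z w1 z1 w2 z2 : R -> R).
Hypothesis HT : TWE v w z w1 z1 w2 z2.

Let D1 : forall x, is_derive w x (w1 x). Proof. apply HT. Qed.
Let D2 : forall x, is_derive z x (z1 x). Proof. apply HT. Qed.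
Let D3 : forall x, is_derive w1 x (w2 x). Proof. apply HT. Qed.
Let D4 : forall x, is_derive z1 x (z2 x). Proof. apply HT. Qed.
Let E1 : forall x, w2 x = ((z x - w x)/2 - v) * w1 x - 2 * ((z x - w x)/2) * Rmax ((z1 x - w1 x)/2) 0.
Proof. apply HT. Qed.
Let E2 : forall x, z2 x = - (v + (z x - w x)/2) * z1 x - 2 * ((z x - w x)/2) * Rmin ((z1 x - w1 x)/2) 0.
Proof. apply HT. Qed.

Ltac dsolve := auto_derive; [repeat split; try (eapply exd_of; eauto) |
  rewrite ?(Derive_eq w w1), ?(Derive_eq z z1), ?(Derive_eq w1 w2), ?(Derive_eq z1 z2) by auto].

Lemma lin_der (a b : R) x : is_derive (fun t => a * w t + b * z t) x (a * w1 x + b * z1 x).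
Proof. dsolve. ring. Qed.
Lemma lin1_der (a b : R) x : is_derive (fun t => a * w1 t + b * z1 t) x (a * w2 x + b * z2 x).
Proof. dsolve. ring. Qed.
Lemma u_der x : is_derive (fun t => (z t - w t) / 2) x ((z1 x - w1 x) / 2).
Proof. dsolve. field. Qed.
Lemma u1_der x : is_derive (fun t => (z1 t - w1 t) / 2) x ((z2 x - w2 x) / 2).
Proof. dsolve. field. Qed.
Lemma u_cont x : continuity_pt (fun t => (z t - w t) / 2) x.
Proof. eapply cont_of_derive. apply u_der. Qed.

Lemma F_const : forall x, w1 x + z1 x + v * (w x + z x) + 2 * ((z x - w x)/2 * ((z x - w x)/2)) =
   w1 0 + z1 0 + v * (w 0 + z 0) + 2 * ((z 0 - w 0)/2 * ((z 0 - w 0)/2)).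
Proof.
  intros x. apply (const_of_derive0 (fun x => w1 x + z1 x + v * (w x + z x) + 2 * ((z x - w x)/2 * ((z x - w x)/2))) (fun _ => 0)); [|auto].
  intros t. dsolve. rewrite E1, E2.
  pose proof (Rmax_Rmin_sum ((z1 t - w1 t) / 2)). nra.
Qed.

Hypothesis HL1 : limm w (-1).
Hypothesis HL2 : limm z (-1).

Definition uu (x : R) := (z x - w x) / 2.
Definition uu1 (x : R) := (z1 x - w1 x) / 2.
Definition uu2 (x : R) := (z2 x - w2 x) / 2.

Lemma limm_u : limm uu 0.
Proof. apply (limm_lin' w z uu (-1) (-1) (-1/2) (1/2)); auto; intros; unfold uu; field. Qed.
Lemma limm_u2 : limm (fun x => uu x * uu x) 0.
Proof. apply (limm_sq' uu _ 0); auto; [apply limm_u| ring]. Qed.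
Lemma limm_S : limm (fun x => w x + z x + 2) 0.
Proof.
  apply (limm_lin' (fun x => w x + z x) (fun _ => 1) _ (-2) 1 1 2); auto.
  apply (limm_lin' w z _ (-1) (-1) 1 1); auto; intros; ring. apply limm_const.
  intros; ring. ring.
Qed.

Lemma S_id : forall x, w1 x + z1 x = - v * (w x + z x + 2) - 2 * (uu x * uu x).
Proof.
  set (c := w1 0 + z1 0 + v * (w 0 + z 0) + 2 * ((z 0 - w 0)/2 * ((z 0 - w 0)/2))).
  assert (Fc : forall x, w1 x + z1 x = c + 2 * v - v * (w x + z x + 2) - 2 * (uu x * uu x)).
  { intros x. pose proof (F_const x). fold c in H. unfold uu. lra. }
  assert (Hc : c + 2 * v = 0).
  { apply (deriv_lim_m (fun x => w x + z x + 2) (fun x => c + 2 * v - v * (w x + z x + 2) - 2 * (uu x * uu x)) 0).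
    - intros x. rewrite <- Fc. dsolve. ring.
    - apply limm_S.
    - apply (limm_lin' (fun _ => 1) (fun x => - v * (w x + z x + 2) - 2 * (uu x * uu x)) _ 1 0 (c + 2 * v) 1).
      apply limm_const.
      apply (limm_lin' (fun x => w x + z x + 2) (fun x => uu x * uu x) _ 0 0 (-v) (-2)); auto.
      apply limm_S. apply limm_u2. intros; ring. ring. intros; ring. ring. }
  intros x. rewrite Fc. lra.
Qed.

Definition Phi (x : R) := w1 x * w1 x + z1 x * z1 x.
Definition dPhi (x : R) := 2 * w1 x * w2 x + 2 * z1 x * z2 x.
Lemma Phi_der x : is_derive Phi x (dPhi x).
Proof. unfold Phi, dPhi. dsolve. ring. Qed.
Lemma Phi_nonneg x : 0 <= Phi x.
Proof. unfold Phi. nra. Qed.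

Lemma Phi_bound x : Rabs (dPhi x + 2 * v * Phi x) <= 6 * Rabs (uu x) * Phi x.
Proof.
  unfold dPhi, Phi. rewrite E1, E2. unfold uu. apply phi_alg.
Qed.

Variables b1 b2 : R.
Hypothesis HR1 : limp w b1.
Hypothesis HR2 : limp z b2.

Lemma limp_u : limp uu ((b2 - b1) / 2).
Proof. apply (limp_lin' w z uu b1 b2 (-1/2) (1/2)); auto; intros; unfold uu; field. Qed.

Lemma u_bound : exists B, 0 <= B /\ forall x, Rabs (uu x) <= B.
Proof.
  destruct (bounded_of_lims uu 0 ((b2 - b1) / 2)) as [B HB].
  - intros; apply u_cont.
  - apply limm_u.
  - apply limp_u.
  - exists B. split; auto. specialize (HB 0). pose proof (Rabs_pos (uu 0)). lra.
Qed.

Lemma const_of_Phi0 x0 : Phi x0 = 0 -> forall x, w1 x = 0 /\ z1 x = 0.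
Proof.
  intros H0 x. destruct u_bound as [B [HB0 HB]].
  assert (Phi x = 0).
  { apply (gronwall Phi dPhi (2 * Rabs v + 6 * B) x0); auto.
    - apply Phi_der.
    - apply Phi_nonneg.
    - intros t. pose proof (Phi_bound t). pose proof (Phi_nonneg t). specialize (HB t).
      replace (dPhi t) with ((dPhi t + 2 * v * Phi t) + (- (2 * v * Phi t))) by ring.
      eapply Rle_trans; [apply Rabs_triang|]. rewrite Rabs_Ropp, !Rabs_mult, (Rabs_right 2) by lra.
      rewrite (Rabs_right (Phi t)) by lra. nra. }
  unfold Phi in H. split; nra.
Qed.

Lemma profile_of_Phi0 x0 : Phi x0 = 0 -> profile_const w z.
Proof.
  intros H0. pose proof (const_of_Phi0 x0 H0) as H.
  exists (w 0), (z 0). intros x. split.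
  - apply (const_of_derive0 w w1); auto. intros t; apply H.
  - apply (const_of_derive0 z z1); auto. intros t; apply H.
Qed.

Lemma eq_inf : - v * (b1 + b2 + 2) - 2 * ((b2 - b1) / 2 * ((b2 - b1) / 2)) = 0.
Proof.
  apply (deriv_lim_p (fun x => w x + z x + 2) (fun x => w1 x + z1 x) (b1 + b2 + 2)).
  - intros x. dsolve. ring.
  - apply (limp_lin' (fun x => w x + z x) (fun _ => 1) _ (b1 + b2) 1 1 2); auto.
    apply (limp_lin' w z _ b1 b2 1 1); auto; intros; ring. apply limp_const. intros; ring. ring.
  - apply (limp_lin' (fun x => w x + z x + 2) (fun x => uu x * uu x) _ (b1 + b2 + 2) ((b2 - b1) / 2 * ((b2 - b1) / 2)) (-v) (-2)).
    + apply (limp_lin' (fun x => w x + z x) (fun _ => 1) _ (b1 + b2) 1 1 2); auto.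
      apply (limp_lin' w z _ b1 b2 1 1); auto; intros; ring. apply limp_const. intros; ring. ring.
    + apply (limp_sq' uu _ ((b2 - b1) / 2)); auto. apply limp_u.
    + intros; rewrite S_id; ring.
    + ring.
Qed.

Lemma limp_S1 : limp (fun x => w1 x + z1 x) 0.
Proof.
  apply (limp_lin' (fun x => w x + z x + 2) (fun x => uu x * uu x) _ (b1 + b2 + 2) ((b2 - b1) / 2 * ((b2 - b1) / 2)) (-v) (-2)).
  + apply (limp_lin' (fun x => w x + z x) (fun _ => 1) _ (b1 + b2) 1 1 2); auto.
    apply (limp_lin' w z _ b1 b2 1 1); auto; intros; ring. apply limp_const. intros; ring. ring.
  + apply (limp_sq' uu _ ((b2 - b1) / 2)); auto. apply limp_u.
  + intros; rewrite S_id; ring.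
  + pose proof eq_inf. lra.
Qed.

Lemma limm_S1 : limm (fun x => w1 x + z1 x) 0.
Proof.
  apply (limm_lin' (fun x => w x + z x + 2) (fun x => uu x * uu x) _ 0 0 (-v) (-2)).
  apply limm_S. apply limm_u2. intros; rewrite S_id; ring. ring.
Qed.


Lemma uu_der x : is_derive uu x (uu1 x).
Proof. apply u_der. Qed.
Lemma uu1_der x : is_derive uu1 x (uu2 x).
Proof. apply u1_der. Qed.

Lemma kappa_lemma (y c : R) : 0 < c -> y * y > c / 4 -> 0 < y -> Rmin 1 (c / 4) <= y.
Proof.
  intros Hc H1 H2. destruct (Rle_dec 1 y). pose proof (Rmin_l 1 (c/4)). lra.
  pose proof (Rmin_r 1 (c/4)). nra.
Qed.

Lemma Phi_split x : Phi x = ((w1 x + z1 x) * (w1 x + z1 x) + 4 * (uu1 x * uu1 x)) / 2.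
Proof. unfold Phi, uu1. field. Qed.

Lemma Phi_tail_right X : (forall x, X <= x -> 0 <= dPhi x) -> Phi X = 0.
Proof.
  intros Hd. destruct (Req_dec (Phi X) 0) as [|Hne]; auto. exfalso.
  set (c := Phi X). assert (Hc : 0 < c) by (pose proof (Phi_nonneg X); unfold c in *; lra).
  assert (Hge : forall x, X <= x -> c <= Phi x).
  { intros x Hx. apply (mono_ge Phi dPhi X x); auto. apply Phi_der. intros t Ht; apply Hd; lra. }
  destruct (limp_S1 (Rmin 1 c) ltac:(apply Rmin_pos; lra)) as [M HM].
  set (X' := Rmax X M + 1).
  assert (HX1 : X <= X') by (unfold X'; pose proof (Rmax_l X M); lra).
  assert (HX2 : M < X') by (unfold X'; pose proof (Rmax_r X M); lra).
  assert (Hu : forall x, X' <= x -> uu1 x * uu1 x > c / 4).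
  { intros x Hx. specialize (HM x ltac:(lra)). specialize (Hge x ltac:(lra)).
    rewrite Phi_split in Hge. pose proof (Rmin_l 1 c). pose proof (Rmin_r 1 c).
    apply Rabs_def2 in HM. 
    assert ((w1 x + z1 x) * (w1 x + z1 x) < c) by nra. lra. }
  assert (Hs : forall x, X' <= x -> 0 < uu1 X' * uu1 x).
  { intros x Hx. apply (no_sign_change uu1 uu2); auto. apply uu1_der.
    intros t Ht Ht0. specialize (Hu t ltac:(lra)). rewrite Ht0 in Hu. lra. }
  destruct (Rlt_le_dec 0 (uu1 X')) as [Hp|Hn].
  - apply (growp uu uu1 ((b2 - b1) / 2) X' (Rmin 1 (c / 4))).
    apply uu_der. apply limp_u. apply Rmin_pos; lra.
    intros x Hx. apply kappa_lemma; auto. specialize (Hs x Hx). nra.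
  - assert (Hn' : uu1 X' < 0) by (specialize (Hu X' (Rle_refl _)); destruct Hn; [lra| rewrite H in Hu; lra]).
    apply (growp_neg uu uu1 ((b2 - b1) / 2) X' (Rmin 1 (c / 4))).
    apply uu_der. apply limp_u. apply Rmin_pos; lra.
    intros x Hx. assert (uu1 x < 0) by (specialize (Hs x Hx); nra).
    pose proof (kappa_lemma (- uu1 x) c Hc ltac:(specialize (Hu x Hx); nra) ltac:(lra)). lra.
Qed.

Lemma Phi_tail_left X : (forall x, x <= X -> dPhi x <= 0) -> Phi X = 0.
Proof.
  intros Hd. destruct (Req_dec (Phi X) 0) as [|Hne]; auto. exfalso.
  set (c := Phi X). assert (Hc : 0 < c) by (pose proof (Phi_nonneg X); unfold c in *; lra).
  assert (Hge : forall x, x <= X -> c <= Phi x).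
  { intros x Hx. apply (mono_le Phi dPhi x X); auto. apply Phi_der. intros t Ht; apply Hd; lra. }
  destruct (limm_S1 (Rmin 1 c) ltac:(apply Rmin_pos; lra)) as [M HM].
  set (X' := Rmin X M - 1).
  assert (HX1 : X' <= X) by (unfold X'; pose proof (Rmin_l X M); lra).
  assert (HX2 : X' < M) by (unfold X'; pose proof (Rmin_r X M); lra).
  assert (Hu : forall x, x <= X' -> uu1 x * uu1 x > c / 4).
  { intros x Hx. specialize (HM x ltac:(lra)). specialize (Hge x ltac:(lra)).
    rewrite Phi_split in Hge. pose proof (Rmin_l 1 c). pose proof (Rmin_r 1 c).
    apply Rabs_def2 in HM. 
    assert ((w1 x + z1 x) * (w1 x + z1 x) < c) by nra. lra. }
  assert (Hs : forall x, x <= X' -> 0 < uu1 x * uu1 X').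
  { intros x Hx. apply (no_sign_change uu1 uu2); auto. apply uu1_der.
    intros t Ht Ht0. specialize (Hu t ltac:(lra)). rewrite Ht0 in Hu. lra. }
  destruct (Rlt_le_dec 0 (uu1 X')) as [Hp|Hn].
  - apply (growm uu uu1 0 X' (Rmin 1 (c / 4))).
    apply uu_der. apply limm_u. apply Rmin_pos; lra.
    intros x Hx. apply kappa_lemma; auto. specialize (Hs x Hx). nra.
  - assert (Hn' : uu1 X' < 0) by (specialize (Hu X' (Rle_refl _)); destruct Hn; [lra| rewrite H in Hu; lra]).
    apply (growm_neg uu uu1 0 X' (Rmin 1 (c / 4))).
    apply uu_der. apply limm_u. apply Rmin_pos; lra.
    intros x Hx. assert (uu1 x < 0) by (specialize (Hs x Hx); nra).
    pose proof (kappa_lemma (- uu1 x) c Hc ltac:(specialize (Hu x Hx); nra) ltac:(lra)). lra.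
Qed.


Lemma core_pos : 0 < v -> profile_const w z.
Proof.
  intros Hv. destruct (limm_tail_le uu 0 (v / 6) limm_u ltac:(lra)) as [X HX].
  apply (profile_of_Phi0 X). apply Phi_tail_left. intros x Hx.
  specialize (HX x Hx). rewrite Rminus_0_r in HX. pose proof (Phi_bound x). pose proof (Phi_nonneg x).
  apply Rabs_le_between in H. pose proof (Rabs_pos (uu x)). nra.
Qed.

Lemma u2_formula x : uu2 x = - v * uu1 x - uu x * (w1 x + z1 x) / 2 + uu x * Rabs (uu1 x).
Proof.
  unfold uu2, uu1, uu. rewrite E1, E2.
  destruct (Rle_dec ((z1 x - w1 x) / 2) 0).
  - rewrite Rmax_right, Rmin_left, Rabs_left1 by lra. field.
  - rewrite Rmax_left, Rmin_right, Rabs_right by lra. field.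
Qed.

Lemma core_zero : v = 0 -> forall x, w x = -1 /\ z x = -1.
Proof.
  intros Hv.
  assert (U2 : forall x, uu2 x = uu x * uu x * uu x + uu x * Rabs (uu1 x)).
  { intros x. rewrite u2_formula, S_id, Hv. field. }
  set (Y := fun x => uu x * uu1 x).
  set (dY := fun x => uu1 x * uu1 x + uu x * uu2 x).
  assert (HY : forall x, is_derive Y x (dY x)).
  { intros x. unfold Y, dY. pose proof (is_derive_mult uu uu1 x _ _ (uu_der x) (uu1_der x)) as H.
    simpl in H. eapply is_derive_val; [apply H; intros; apply Rmult_comm|]. unfold plus, mult; simpl. ring. }
  assert (HdY : forall x, 0 <= dY x).
  { intros x. unfold dY. rewrite U2. pose proof (Rabs_pos (uu1 x)). nra. }
  assert (Hsq : forall x, is_derive (fun t => uu t * uu t) x (2 * Y x)).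
  { intros x. unfold Y. pose proof (is_derive_mult uu uu x _ _ (uu_der x) (uu_der x)) as H.
    simpl in H. eapply is_derive_val; [apply H; intros; apply Rmult_comm|]. unfold plus, mult; simpl. ring. }
  assert (Y0 : forall x, Y x = 0).
  { intros x1. destruct (Rtotal_order (Y x1) 0) as [Hn|[H0|Hp]]; auto; exfalso.
    - apply (growm_neg (fun t => uu t * uu t) (fun t => 2 * Y t) 0 x1 (- 2 * Y x1)); auto.
      apply limm_u2. lra. intros x Hx. assert (Y x <= Y x1) by (apply (mono_ge Y dY); auto). lra.
    - apply (growp (fun t => uu t * uu t) (fun t => 2 * Y t) ((b2 - b1) / 2 * ((b2 - b1) / 2)) x1 (2 * Y x1)); auto.
      apply (limp_sq' uu _ ((b2 - b1) / 2)); auto. apply limp_u. lra.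
      intros x Hx. assert (Y x1 <= Y x) by (apply (mono_ge Y dY); auto). lra. }
  assert (dY0 : forall x, dY x = 0).
  { intros x. assert (is_derive (fun _ => 0) x (dY x)) by (eapply is_derive_ext; [|apply HY]; intros; simpl; auto).
    apply is_derive_unique in H. rewrite Derive_const in H. auto. }
  assert (u0 : forall x, uu x = 0).
  { intros x. specialize (dY0 x). unfold dY in dY0. rewrite U2 in dY0. pose proof (Rabs_pos (uu1 x)).
    assert (0 <= uu x * uu x * Rabs (uu1 x)) by (apply Rmult_le_pos; nra).
    assert (0 <= uu x * uu x * (uu x * uu x)) by nra.
    assert (0 <= uu1 x * uu1 x) by nra.
    assert (uu x * uu x * (uu x * uu x) = 0) by nra.
    apply Rmult_integral in H3. destruct H3 as [H3|H3]; apply Rmult_integral in H3; lra. }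
  assert (S0 : forall x, w x + z x + 2 = 0).
  { intros x. apply (limm_const_eq (fun t => w t + z t + 2)); [|apply limm_S].
    intros t. apply (const_of_derive0 (fun t => w t + z t + 2) (fun t => w1 t + z1 t)).
    intros s. dsolve. rewrite !Rmult_1_l; reflexivity. intros s. rewrite S_id, u0, Hv. ring. }
  intros x. specialize (S0 x). specialize (u0 x). unfold uu in u0. lra.
Qed.

End Core.

Lemma der_of_quad (f : R -> R) t l : (forall h, Rabs (f (t + h) - f t - l * h) <= h * h) -> is_derive f t l.
Proof.
  intros H. apply is_derive_Reals. intros eps He. exists (mkposreal eps He). intros h Hh Hd. simpl in Hd.
  replace ((f (t + h) - f t) / h - l) with ((f (t + h) - f t - l * h) / h) by (field; auto).
  unfold Rdiv. rewrite Rabs_mult, Rabs_inv. specialize (H h).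
  assert (0 < Rabs h) by (apply Rabs_pos_lt; auto).
  apply (Rmult_lt_reg_r (Rabs h)); auto. rewrite Rmult_assoc, Rinv_l by lra. rewrite Rmult_1_r.
  assert (h * h = Rabs h * Rabs h) by (rewrite <- Rabs_mult; rewrite Rabs_right; nra). nra.
Qed.

Lemma negsq_der t : is_derive (fun s => Rmin s 0 * Rmin s 0) t (2 * Rmin t 0).
Proof.
  apply der_of_quad. intros h. apply Rabs_le.
  destruct (Rle_dec t 0); destruct (Rle_dec (t + h) 0);
  [rewrite (Rmin_left t), (Rmin_left (t+h)) by lra|rewrite (Rmin_left t), (Rmin_right (t+h)) by lra
  |rewrite (Rmin_right t), (Rmin_left (t+h)) by lra|rewrite (Rmin_right t), (Rmin_right (t+h)) by lra];
  split; nra.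
Qed.

Lemma possq_der t : is_derive (fun s => Rmax s 0 * Rmax s 0) t (2 * Rmax t 0).
Proof.
  apply der_of_quad. intros h. apply Rabs_le.
  destruct (Rle_dec t 0); destruct (Rle_dec (t + h) 0);
  [rewrite (Rmax_right t), (Rmax_right (t+h)) by lra|rewrite (Rmax_right t), (Rmax_left (t+h)) by lra
  |rewrite (Rmax_left t), (Rmax_right (t+h)) by lra|rewrite (Rmax_left t), (Rmax_left (t+h)) by lra];
  split; nra.
Qed.

Lemma negsq_comp (p dp : R -> R) x : is_derive p x (dp x) ->
  is_derive (fun t => Rmin (p t) 0 * Rmin (p t) 0) x (2 * Rmin (p x) 0 * dp x).
Proof.
  intros H. pose proof (is_derive_comp (fun s => Rmin s 0 * Rmin s 0) p x _ _ (negsq_der (p x)) H) as HH.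
  eapply is_derive_val; [exact HH|]. simpl. unfold scal; simpl. unfold mult; simpl. ring.
Qed.
Lemma possq_comp (p dp : R -> R) x : is_derive p x (dp x) ->
  is_derive (fun t => Rmax (p t) 0 * Rmax (p t) 0) x (2 * Rmax (p x) 0 * dp x).
Proof.
  intros H. pose proof (is_derive_comp (fun s => Rmax s 0 * Rmax s 0) p x _ _ (possq_der (p x)) H) as HH.
  eapply is_derive_val; [exact HH|]. simpl. unfold scal; simpl. unfold mult; simpl. ring.
Qed.

Lemma rho_alg (p q u v B : R) : v <= 0 -> - B <= u <= B ->
  let P := Rmin p 0 in let Q := Rmin q 0 in
  Rabs (2 * P * ((2 * u - v) * p + 8 * u * Rmin ((q - p) / 8) 0) +
        2 * Q * ((- 2 * u - v) * q + 8 * u * Rmax ((q - p) / 8) 0))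
  <= (6 * B - 2 * v) * (P * P + Q * Q).
Proof.
  intros Hv Hu P Q. unfold P, Q. apply Rabs_le.
  assert (0 <= (B - u) * (p*p)) by (apply Rmult_le_pos; [lra|apply Rle_0_sqr]). assert (0 <= (B + u) * (p*p)) by (apply Rmult_le_pos; [lra|apply Rle_0_sqr]).
  assert (0 <= (B - u) * (q*q)) by (apply Rmult_le_pos; [lra|apply Rle_0_sqr]). assert (0 <= (B + u) * (q*q)) by (apply Rmult_le_pos; [lra|apply Rle_0_sqr]).
  assert (0 <= (B - u) * ((p-q)*(p-q))) by (apply Rmult_le_pos; [lra|apply Rle_0_sqr]). assert (0 <= (B + u) * ((p-q)*(p-q))) by (apply Rmult_le_pos; [lra|apply Rle_0_sqr]).
  assert (0 <= (B - u) * ((p+q)*(p+q))) by (apply Rmult_le_pos; [lra|apply Rle_0_sqr]). assert (0 <= (B + u) * ((p+q)*(p+q))) by (apply Rmult_le_pos; [lra|apply Rle_0_sqr]).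
  assert (0 <= - v * (p * p)) by (apply Rmult_le_pos; [lra|apply Rle_0_sqr]). assert (0 <= - v * (q * q)) by (apply Rmult_le_pos; [lra|apply Rle_0_sqr]).
  destruct (Rle_dec p 0); destruct (Rle_dec q 0); destruct (Rle_dec ((q - p)/8) 0);
  repeat first [rewrite (Rmin_left p) by lra | rewrite (Rmin_right p) by lra
               | rewrite (Rmin_left q) by lra | rewrite (Rmin_right q) by lra
               | rewrite (Rmin_left ((q - p)/8)) by lra | rewrite (Rmin_right ((q - p)/8)) by lra
               | rewrite (Rmax_left ((q - p)/8)) by lra | rewrite (Rmax_right ((q - p)/8)) by lra];
  split; nra.
Qed.

Lemma pi_inner (p q u v B : R) : v <= 0 -> - B <= u <= B -> 0 < p -> 0 < q ->
  Rabs (((2 * u - v) * p + 8 * u * Rmin ((q - p) / 8) 0) * q +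
        p * ((- 2 * u - v) * q + 8 * u * Rmax ((q - p) / 8) 0)) <= (B - 2 * v) * (p * q).
Proof.
  intros Hv Hu Hp Hq. apply Rabs_le.
  assert (0 <= p * q) by nra.
  destruct (Rle_dec ((q - p)/8) 0).
  - rewrite Rmin_left, Rmax_right by lra.
    assert (0 <= (B - u) * (q * (p - q))) by (apply Rmult_le_pos; nra).
    assert (0 <= (B + u) * (q * (p - q))) by (apply Rmult_le_pos; nra).
    assert (0 <= q * q) by nra.
    assert (0 <= (B - u) * (q * q)) by (apply Rmult_le_pos; nra).
    assert (0 <= (B + u) * (q * q)) by (apply Rmult_le_pos; nra).
    split; nra.
  - rewrite Rmin_right, Rmax_left by lra.
    assert (0 <= (B - u) * (p * (q - p))) by (apply Rmult_le_pos; nra).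
    assert (0 <= (B + u) * (p * (q - p))) by (apply Rmult_le_pos; nra).
    assert (0 <= (B - u) * (p * p)) by (apply Rmult_le_pos; nra).
    assert (0 <= (B + u) * (p * p)) by (apply Rmult_le_pos; nra).
    split; nra.
Qed.

Lemma pi_alg (p q u v B : R) : v <= 0 -> - B <= u <= B ->
  let dp := (2 * u - v) * p + 8 * u * Rmin ((q - p) / 8) 0 in
  let dq := (- 2 * u - v) * q + 8 * u * Rmax ((q - p) / 8) 0 in
  Rabs (2 * Rmax p 0 * dp * (Rmax q 0 * Rmax q 0) + Rmax p 0 * Rmax p 0 * (2 * Rmax q 0 * dq))
  <= (2 * B - 4 * v) * (Rmax p 0 * Rmax p 0 * (Rmax q 0 * Rmax q 0)).
Proof.
  intros Hv Hu dp dq.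
  destruct (Rle_dec p 0). { rewrite Rmax_right by lra. replace (2 * 0 * dp * (Rmax q 0 * Rmax q 0) + 0 * 0 * (2 * Rmax q 0 * dq)) with 0 by ring. rewrite Rabs_R0. nra. }
  destruct (Rle_dec q 0). { rewrite (Rmax_right q) by lra. replace (2 * Rmax p 0 * dp * (0 * 0) + Rmax p 0 * Rmax p 0 * (2 * 0 * dq)) with 0 by ring. rewrite Rabs_R0. nra. }
  rewrite !Rmax_left by lra.
  pose proof (pi_inner p q u v B Hv Hu ltac:(lra) ltac:(lra)). fold dp dq in H.
  replace (2 * p * dp * (q * q) + p * p * (2 * q * dq)) with ((2 * p * q) * (dp * q + p * dq)) by ring.
  rewrite Rabs_mult, (Rabs_right (2 * p * q)) by nra.
  apply Rmult_le_compat_l with (r := 2 * p * q) in H; [|nra]. nra.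
Qed.

Section Neg.
Variables (v : R) (w z w1 z1 w2 z2 : R -> R) (b1 b2 : R).
Hypothesis HT : TWE v w z w1 z1 w2 z2.
Hypothesis HL1 : limm w (-1).
Hypothesis HL2 : limm z (-1).
Hypothesis HR1 : limp w b1.
Hypothesis HR2 : limp z b2.
Hypothesis Hv : v < 0.

Let D1 : forall x, is_derive w x (w1 x). Proof. apply HT. Qed.
Let D2 : forall x, is_derive z x (z1 x). Proof. apply HT. Qed.
Let D3 : forall x, is_derive w1 x (w2 x). Proof. apply HT. Qed.
Let D4 : forall x, is_derive z1 x (z2 x). Proof. apply HT. Qed.
Let E1 : forall x, w2 x = ((z x - w x)/2 - v) * w1 x - 2 * ((z x - w x)/2) * Rmax ((z1 x - w1 x)/2) 0.
Proof. apply HT. Qed.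
Let E2 : forall x, z2 x = - (v + (z x - w x)/2) * z1 x - 2 * ((z x - w x)/2) * Rmin ((z1 x - w1 x)/2) 0.
Proof. apply HT. Qed.

Ltac dsolve := auto_derive; [repeat split; try (eapply exd_of; eauto) |
  rewrite ?(Derive_eq w w1), ?(Derive_eq z z1), ?(Derive_eq w1 w2), ?(Derive_eq z1 z2) by auto].

Definition pp x := 3 * w1 x - z1 x.
Definition qq x := 3 * z1 x - w1 x.
Definition dpp x := 3 * w2 x - z2 x.
Definition dqq x := 3 * z2 x - w2 x.

Lemma pp_der x : is_derive pp x (dpp x).
Proof. unfold pp, dpp. dsolve. ring. Qed.
Lemma qq_der x : is_derive qq x (dqq x).
Proof. unfold qq, dqq. dsolve. ring. Qed.
Lemma E_der x : is_derive (fun t => 3 * w t - z t) x (pp x).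
Proof. unfold pp. dsolve. ring. Qed.
Lemma G_der x : is_derive (fun t => 3 * z t - w t) x (qq x).
Proof. unfold qq. dsolve. ring. Qed.

Lemma uu1_pq x : uu1 w1 z1 x = (qq x - pp x) / 8.
Proof. unfold uu1, pp, qq. field. Qed.

Lemma pp_formula x : dpp x = (2 * uu w z x - v) * pp x + 8 * uu w z x * Rmin ((qq x - pp x) / 8) 0.
Proof.
  unfold dpp, pp, qq, uu. rewrite E1, E2.
  replace ((3 * z1 x - w1 x - (3 * w1 x - z1 x)) / 8) with ((z1 x - w1 x) / 2) by field.
  destruct (Rle_dec ((z1 x - w1 x) / 2) 0).
  - rewrite Rmax_right, Rmin_left by lra. field.
  - rewrite Rmax_left, Rmin_right by lra. field.
Qed.
Lemma qq_formula x : dqq x = (- 2 * uu w z x - v) * qq x + 8 * uu w z x * Rmax ((qq x - pp x) / 8) 0.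
Proof.
  unfold dqq, pp, qq, uu. rewrite E1, E2.
  replace ((3 * z1 x - w1 x - (3 * w1 x - z1 x)) / 8) with ((z1 x - w1 x) / 2) by field.
  destruct (Rle_dec ((z1 x - w1 x) / 2) 0).
  - rewrite Rmax_right, Rmin_left by lra. field.
  - rewrite Rmax_left, Rmin_right by lra. field.
Qed.

Let Bnd := u_bound v w z w1 z1 w2 z2 HT HL1 HL2 b1 b2 HR1 HR2.

Lemma rho_zero : (exists x0, 0 <= pp x0 /\ 0 <= qq x0) -> forall x, 0 <= pp x /\ 0 <= qq x.
Proof.
  intros [x0 [H1 H2]] x. destruct Bnd as [B [HB0 HB]].
  set (rho := fun t => Rmin (pp t) 0 * Rmin (pp t) 0 + Rmin (qq t) 0 * Rmin (qq t) 0).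
  set (drho := fun t => 2 * Rmin (pp t) 0 * dpp t + 2 * Rmin (qq t) 0 * dqq t).
  assert (rho x = 0).
  { apply (gronwall rho drho (6 * B - 2 * v) x0).
    - intros t. unfold rho, drho. apply (is_derive_plus (fun t => Rmin (pp t) 0 * Rmin (pp t) 0) (fun t => Rmin (qq t) 0 * Rmin (qq t) 0)).
      apply negsq_comp, pp_der. apply negsq_comp, qq_der.
    - intros t. unfold rho. nra.
    - intros t. unfold drho, rho. rewrite pp_formula, qq_formula.
      pose proof (HB t). apply Rabs_le_between in H. apply rho_alg; lra.
    - unfold rho. rewrite Rmin_right, (Rmin_right (qq x0)) by lra. ring. }
  unfold rho in H. split.
  - destruct (Rle_dec 0 (pp x)); auto. rewrite Rmin_left in H by lra. nra.
  - destruct (Rle_dec 0 (qq x)); auto. rewrite (Rmin_left (qq x)) in H by lra. nra.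
Qed.

Lemma pi_zero : (exists x0, pp x0 <= 0 \/ qq x0 <= 0) -> forall x, pp x <= 0 \/ qq x <= 0.
Proof.
  intros [x0 H0] x. destruct Bnd as [B [HB0 HB]].
  set (P2 := fun t => Rmax (pp t) 0 * Rmax (pp t) 0).
  set (Q2 := fun t => Rmax (qq t) 0 * Rmax (qq t) 0).
  set (pi := fun t => P2 t * Q2 t).
  set (dpi := fun t => 2 * Rmax (pp t) 0 * dpp t * Q2 t + P2 t * (2 * Rmax (qq t) 0 * dqq t)).
  assert (pi x = 0).
  { apply (gronwall pi dpi (2 * B - 4 * v) x0).
    - intros t. unfold pi, dpi. 
      pose proof (is_derive_mult P2 Q2 t _ _ (possq_comp pp dpp t (pp_der t)) (possq_comp qq dqq t (qq_der t))) as HH.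
      simpl in HH. eapply is_derive_val; [apply HH; intros; apply Rmult_comm|]. unfold plus, mult; simpl. ring.
    - intros t. unfold pi, P2, Q2. apply Rmult_le_pos; nra.
    - intros t. unfold dpi, pi, P2, Q2. rewrite pp_formula, qq_formula.
      pose proof (HB t). apply Rabs_le_between in H. apply pi_alg; lra.
    - unfold pi, P2, Q2. destruct H0 as [H0|H0].
      + rewrite (Rmax_right (pp x0)) by lra. ring.
      + rewrite (Rmax_right (qq x0)) by lra. ring. }
  unfold pi, P2, Q2 in H.
  destruct (Rle_dec (pp x) 0); auto. destruct (Rle_dec (qq x) 0); auto.
  rewrite !Rmax_left in H by lra. exfalso. assert (0 < pp x * pp x * (qq x * qq x)).
  { apply Rmult_lt_0_compat; nra. } lra.
Qed.


Lemma u0_const : (b2 - b1) / 2 = 0 -> forall x, w1 x = 0 /\ z1 x = 0.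
Proof.
  intros H0. pose proof (limp_u w z b1 b2 HR1 HR2) as Hl. rewrite H0 in Hl.
  destruct (limp_tail_ge _ 0 (- v / 6) Hl ltac:(lra)) as [X HX].
  apply (const_of_Phi0 v w z w1 z1 w2 z2 HT HL1 HL2 b1 b2 HR1 HR2 X).
  apply (Phi_tail_right v w z w1 z1 w2 z2 HT HL1 HL2 b1 b2 HR1 HR2 X).
  intros x Hx. specialize (HX x Hx). rewrite Rminus_0_r in HX.
  pose proof (Phi_bound v w z w1 z1 w2 z2 HT x). pose proof (Phi_nonneg w1 z1 x).
  apply Rabs_le_between in H. pose proof (Rabs_pos (uu w z x)). nra.
Qed.

Lemma m0_case : (forall x, 0 <= pp x /\ 0 <= qq x /\ (pp x = 0 \/ qq x = 0)) -> ~ profile_const w z ->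
  (forall x, z1 x - w1 x > 0 /\ pp x = 0) \/ (forall x, z1 x - w1 x < 0 /\ qq x = 0).
Proof.
  intros Hm Hnc.
  assert (HPhi : forall x, Phi w1 z1 x <> 0).
  { intros x H. apply Hnc. apply (profile_of_Phi0 v w z w1 z1 w2 z2 HT HL1 HL2 b1 b2 HR1 HR2 x H). }
  assert (Hu1 : forall x, uu1 w1 z1 x <> 0).
  { intros x H. apply (HPhi x). unfold uu1 in H. destruct (Hm x) as [_ [_ [H1|H1]]]; unfold pp, qq in H1;
    unfold Phi; assert (z1 x = w1 x) by lra; assert (w1 x = 0) by lra; nra. }
  assert (Hsg : forall x, 0 < uu1 w1 z1 0 * uu1 w1 z1 x).
  { intros x. destruct (Rle_dec 0 x).
    - apply (no_sign_change (uu1 w1 z1) (uu2 w2 z2)); auto. apply (uu1_der v w z w1 z1 w2 z2 HT).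
    - rewrite Rmult_comm. apply (no_sign_change (uu1 w1 z1) (uu2 w2 z2)); [| lra| auto]. apply (uu1_der v w z w1 z1 w2 z2 HT). }
  destruct (Rlt_le_dec 0 (uu1 w1 z1 0)) as [Hp|Hn].
  - left. intros x. specialize (Hsg x). assert (uu1 w1 z1 x > 0) by nra. unfold uu1 in H.
    split; [lra|]. destruct (Hm x) as [H1 [H2 [H3|H3]]]; auto. unfold pp, qq in *. lra.
  - right. assert (uu1 w1 z1 0 < 0) by (destruct Hn; auto; exfalso; apply (Hu1 0); auto).
    intros x. specialize (Hsg x). assert (uu1 w1 z1 x < 0) by nra. unfold uu1 in H0.
    split; [lra|]. destruct (Hm x) as [H1 [H2 [H3|H3]]]; auto. unfold pp, qq in *. lra.
Qed.

Lemma caseB_pos : (forall x, 0 < pp x /\ 0 < qq x) -> 0 < (b2 - b1) / 2 -> False.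
Proof.
  intros Hpq Hu.
  destruct (limp_tail_ge _ _ ((b2 - b1) / 4) (limp_u w z b1 b2 HR1 HR2) ltac:(lra)) as [X HX].
  assert (Hup : forall x, X <= x -> 0 <= uu w z x) by (intros x Hx; specialize (HX x Hx); apply Rabs_le_between in HX; lra).
  assert (Hd : forall x, X <= x -> 0 <= dpp x).
  { intros x Hx. rewrite pp_formula. specialize (Hup x Hx). destruct (Hpq x) as [Hp Hq].
    destruct (Rle_dec ((qq x - pp x) / 8) 0).
    - rewrite Rmin_left by lra. nra.
    - rewrite Rmin_right by lra. nra. }
  apply (growp (fun t => 3 * w t - z t) pp (3 * b1 - b2) X (pp X)).
  - apply E_der.
  - apply (limp_lin' w z _ b1 b2 3 (-1)); auto; intros; ring.
  - apply Hpq.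
  - intros x Hx. apply (mono_ge pp dpp X x); auto. apply pp_der. intros t Ht; apply Hd; lra.
Qed.

Lemma caseB_neg : (forall x, 0 < pp x /\ 0 < qq x) -> (b2 - b1) / 2 < 0 -> False.
Proof.
  intros Hpq Hu.
  destruct (limp_tail_ge _ _ (- (b2 - b1) / 4) (limp_u w z b1 b2 HR1 HR2) ltac:(lra)) as [X HX].
  assert (Hup : forall x, X <= x -> uu w z x <= 0) by (intros x Hx; specialize (HX x Hx); apply Rabs_le_between in HX; lra).
  assert (Hd : forall x, X <= x -> 0 <= dqq x).
  { intros x Hx. rewrite qq_formula. specialize (Hup x Hx). destruct (Hpq x) as [Hp Hq].
    destruct (Rle_dec ((qq x - pp x) / 8) 0).
    - rewrite Rmax_right by lra. nra.
    - rewrite Rmax_left by lra. nra. }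
  apply (growp (fun t => 3 * z t - w t) qq (3 * b2 - b1) X (qq X)).
  - apply G_der.
  - apply (limp_lin' w z _ b1 b2 (-1) 3); auto; intros; ring.
  - apply Hpq.
  - intros x Hx. apply (mono_ge qq dqq X x); auto. apply qq_der. intros t Ht; apply Hd; lra.
Qed.


Lemma u2_pq x : uu2 w2 z2 x = - v * uu1 w1 z1 x - uu w z x * ((pp x + qq x) / 2) / 2 + uu w z x * Rabs (uu1 w1 z1 x).
Proof.
  rewrite (u2_formula v w z w1 z1 w2 z2 HT). unfold pp, qq. field.
Qed.

Lemma caseC_pos : (forall x, pp x < 0 \/ qq x < 0) -> 0 < (b2 - b1) / 2 -> False.
Proof.
  intros Hpq Hu. destruct Bnd as [B [HB0 HB]].
  destruct (limp_tail_ge _ _ ((b2 - b1) / 4) (limp_u w z b1 b2 HR1 HR2) ltac:(lra)) as [X HX].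
  assert (Hup : forall x, X <= x -> (b2 - b1) / 4 <= uu w z x) by (intros x Hx; specialize (HX x Hx); apply Rabs_le_between in HX; lra).
  destruct (classic (exists y, X <= y /\ 0 <= uu1 w1 z1 y)) as [[y [Hy1 Hy2]]|Hno].
  -
    set (sg := fun t => Rmin (uu1 w1 z1 t) 0 * Rmin (uu1 w1 z1 t) 0).
    set (dsg := fun t => 2 * Rmin (uu1 w1 z1 t) 0 * uu2 w2 z2 t).
    assert (Hs : forall x, y <= x -> sg x = 0).
    { apply (gronwall_fwd sg dsg (2 * (B - v))).
      - intros t. apply negsq_comp. apply (uu1_der v w z w1 z1 w2 z2 HT).
      - intros t. unfold sg. nra.
      - intros t Ht. unfold dsg, sg. destruct (Rle_dec (uu1 w1 z1 t) 0) as [Hn|Hn].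
        + rewrite Rmin_left by lra. rewrite u2_pq.
          destruct (Req_dec (uu1 w1 z1 t) 0) as [H0|H0]. { rewrite H0. nra. }
          assert (Hq : qq t < 0) by (rewrite uu1_pq in Hn, H0; destruct (Hpq t); lra).
          rewrite Rabs_left by lra. rewrite uu1_pq in *.
          assert (Hut : 0 <= uu w z t) by (specialize (Hup t ltac:(lra)); lra).
          pose proof (HB t). apply Rabs_le_between in H.
          set (a := (qq t - pp t) / 8) in *.
          replace (pp t) with (qq t - 8 * a) by (unfold a; field).
          assert (0 <= uu w z t * (a * qq t)) by (apply Rmult_le_pos; nra).
          assert (0 <= (B - uu w z t) * (a * a)) by (apply Rmult_le_pos; nra).
          nra.
        + rewrite Rmin_right by lra. nra.
      - unfold sg. rewrite Rmin_right by lra. ring. }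
    assert (Hpn : forall x, y <= x -> pp x < 0).
    { intros x Hx. specialize (Hs x Hx). unfold sg in Hs.
      assert (0 <= uu1 w1 z1 x) by (destruct (Rle_dec 0 (uu1 w1 z1 x)); auto; rewrite Rmin_left in Hs by lra; nra).
      rewrite uu1_pq in H. destruct (Hpq x); lra. }
    assert (Hd : forall x, y <= x -> dpp x <= 0).
    { intros x Hx. rewrite pp_formula. specialize (Hs x Hx). unfold sg in Hs.
      assert (0 <= uu1 w1 z1 x) by (destruct (Rle_dec 0 (uu1 w1 z1 x)); auto; rewrite Rmin_left in Hs by lra; nra).
      rewrite uu1_pq in H. rewrite Rmin_right by lra. specialize (Hpn x Hx).
      specialize (Hup x ltac:(lra)). nra. }
    apply (growp_neg (fun t => 3 * w t - z t) pp (3 * b1 - b2) y (- pp y)).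
    + apply E_der.
    + apply (limp_lin' w z _ b1 b2 3 (-1)); auto; intros; ring.
    + specialize (Hpn y (Rle_refl _)). lra.
    + intros x Hx. assert (pp x <= pp y) by (apply (mono_le pp dpp y x); auto; [apply pp_der| intros t Ht; apply Hd; lra]). lra.
  -
    assert (Hneg : forall y, X <= y -> uu1 w1 z1 y < 0).
    { intros y Hy. destruct (Rlt_le_dec (uu1 w1 z1 y) 0); auto. exfalso; apply Hno; exists y; auto. }
    destruct (global_max (uu w z) X) as [xi Hxi].
    + intros t. apply (u_cont v w z w1 z1 w2 z2 HT).
    + apply limm_u; auto.
    + specialize (Hup X (Rle_refl _)). lra.
    + intros x Hx. apply (mono_le (uu w z) (uu1 w1 z1) X x); auto. apply (uu_der v w z w1 z1 w2 z2 HT).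
      intros t Ht. specialize (Hneg t ltac:(lra)). lra.
    + apply (max_second (uu w z) (uu1 w1 z1) (uu2 w2 z2) xi); auto.
      apply (uu_der v w z w1 z1 w2 z2 HT). apply (uu1_der v w z w1 z1 w2 z2 HT).
      assert (H0 : uu1 w1 z1 xi = 0) by (apply (deriv_at_max (uu w z) xi); auto; apply (uu_der v w z w1 z1 w2 z2 HT)).
      rewrite u2_pq, H0, Rabs_R0. rewrite uu1_pq in H0.
      assert (Hs : pp xi + qq xi < 0) by (destruct (Hpq xi); lra).
      assert (0 < uu w z xi) by (specialize (Hxi X); specialize (Hup X (Rle_refl _)); lra).
      nra.
Qed.

End Neg.

Definition uH (v y : R) : R := - 2 * v / (1 + exp (v * y)).
Definition H1 (v y : R) : R := uH v y - 1.
Definition H2 (v y : R) : R := 3 * uH v y - 1.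

Lemma pos_of_incr (U dU : R -> R) : (forall x, is_derive U x (dU x)) -> (forall x, 0 < dU x) ->
  limm U 0 -> forall x, 0 < U x.
Proof.
  intros Hd Hp Hl x. destruct (Rlt_le_dec 0 (U x)) as [|Hn]; auto. exfalso.
  assert (H1 : U (x - 1) < U x) by (apply (mono_gt U dU); auto; lra).
  destruct (Hl (- U (x - 1)) ltac:(lra)) as [M HM].
  set (y := Rmin M (x - 1) - 1).
  assert (U y <= U (x - 1)) by (apply (mono_ge U dU); auto; [unfold y; pose proof (Rmin_r M (x - 1)); lra| intros; apply Rlt_le, Hp]).
  specialize (HM y ltac:(unfold y; pose proof (Rmin_l M (x - 1)); lra)). apply Rabs_def2 in HM. lra.
Qed.

Lemma uniq_pos v w z w1 z1 w2 z2 : TWE v w z w1 z1 w2 z2 -> v < 0 -> limm w (-1) -> limm z (-1) ->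
  (forall x, pp w1 z1 x = 0) -> (forall x, z1 x - w1 x > 0) ->
  exists s, forall x, w x = H1 v (x + s) /\ z x = H2 v (x + s).
Proof.
  intros HT Hv HL1 HL2 Hp Hd.
  pose proof HT as [D1 [D2 [D3 [D4 [E1 E2]]]]].
  assert (Ez : forall x, z x = 3 * w x + 2).
  { intros x. assert (3 * w x - z x = -2).
    { apply (limm_const_eq (fun t => 3 * w t - z t)).
      - intros t. apply (const_of_derive0 (fun t => 3 * w t - z t) (pp w1 z1)).
        apply (E_der v w z w1 z1 w2 z2 HT). apply Hp.
      - apply (limm_lin' w z _ (-1) (-1) 3 (-1)); auto; intros; ring. }
    lra. }
  assert (Ez1 : forall x, z1 x = 3 * w1 x) by (intros x; specialize (Hp x); unfold pp in Hp; lra).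
  set (K := - 2 * v).
  assert (Hw1 : forall x, w1 x = (w x + 1) * (K - (w x + 1)) / 2).
  { intros x. pose proof (S_id v w z w1 z1 w2 z2 HT HL1 HL2 x). unfold uu in H.
    rewrite Ez, Ez1 in H. unfold K. nra. }
  assert (Hw1p : forall x, 0 < w1 x) by (intros x; specialize (Hd x); rewrite Ez1 in Hd; lra).
  assert (HU : forall x, 0 < w x + 1).
  { apply (pos_of_incr (fun t => w t + 1) w1); auto.
    - intros x. eapply is_derive_val. apply (is_derive_plus w (fun _ => 1) x (w1 x) 0 (D1 x) (is_derive_const 1 x)).
      simpl; unfold plus; simpl; ring.
    - apply (limm_lin' w (fun _ => 1) _ (-1) 1 1 1); auto. apply limm_const. intros; ring. ring. }
  assert (HUK : forall x, 0 < K - (w x + 1)).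
  { intros x. specialize (Hw1p x). rewrite Hw1 in Hw1p. specialize (HU x).
    apply Rmult_lt_reg_l with (r := w x + 1); auto. nra. }
  set (l := fun x => ln ((w x + 1) / (K - (w x + 1)))).
  assert (Hl : forall x, l x = l 0 - v * x).
  { intros x.
    assert (forall t, is_derive (fun t => l t + v * t) t 0).
    { intros t. unfold l. auto_derive.
      - repeat split; try (eapply exd_of; eauto); try (apply Rdiv_lt_0_compat; auto);
        try (intro; specialize (HUK t); lra); try (specialize (HUK t); lra).
      - rewrite (Derive_eq w w1) by auto. rewrite Hw1. unfold K.
        specialize (HU t). specialize (HUK t). unfold K in HUK. field. split; lra. }
    pose proof (const_of_derive0 (fun t => l t + v * t) (fun _ => 0) H (fun _ => eq_refl) x 0).
    simpl in H0. lra. }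
  exists (- l 0 / v). intros x.
  assert (HwU : w x + 1 = K / (1 + exp (v * (x + - l 0 / v)))).
  { replace (v * (x + - l 0 / v)) with (- l x) by (rewrite Hl; field; lra).
    assert (exp (l x) = (w x + 1) / (K - (w x + 1))) by (unfold l; apply exp_ln; apply Rdiv_lt_0_compat; auto).
    rewrite exp_Ropp, H. specialize (HU x). specialize (HUK x).
    replace (/ ((w x + 1) / (K - (w x + 1)))) with ((K - (w x + 1)) / (w x + 1)) by (field; lra).
    assert (0 < K) by (unfold K; lra).
    field. split; lra. }
  unfold H1, H2, uH. fold K. rewrite Ez. split; lra.
Qed.

Lemma core_neg v w z w1 z1 w2 z2 b1 b2 : TWE v w z w1 z1 w2 z2 -> v < 0 -> limm w (-1) -> limm z (-1) ->
  limp w b1 -> limp z b2 -> ~ profile_const w z ->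
  (exists s, forall x, w x = H1 v (x + s) /\ z x = H2 v (x + s)) \/
  (exists s, forall x, w x = H2 v (x + s) /\ z x = H1 v (x + s)).
Proof.
  intros HT Hv HL1 HL2 HR1 HR2 Hnc.
  pose proof (TWE_swap _ _ _ _ _ _ _ HT) as HTs.
  assert (Hu0 : (b2 - b1) / 2 = 0 -> forall x, pp w1 z1 x = 0 /\ qq w1 z1 x = 0).
  { intros H x. destruct (u0_const v w z w1 z1 w2 z2 b1 b2 HT HL1 HL2 HR1 HR2 Hv H x) as [A B].
    unfold pp, qq. rewrite A, B. split; ring. }
  destruct (classic (exists x0, 0 <= pp w1 z1 x0 /\ 0 <= qq w1 z1 x0)) as [Hex|Hnex].
  - pose proof (rho_zero v w z w1 z1 w2 z2 b1 b2 HT HL1 HL2 HR1 HR2 Hv Hex) as Hge.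
    destruct (classic (exists x1, pp w1 z1 x1 = 0 \/ qq w1 z1 x1 = 0)) as [[x1 Hx1]|Hnz].
    + assert (Hle := pi_zero v w z w1 z1 w2 z2 b1 b2 HT HL1 HL2 HR1 HR2 Hv).
      assert (Hm : forall x, 0 <= pp w1 z1 x /\ 0 <= qq w1 z1 x /\ (pp w1 z1 x = 0 \/ qq w1 z1 x = 0)).
      { assert (Hx1' : pp w1 z1 x1 <= 0 \/ qq w1 z1 x1 <= 0) by (destruct Hx1; [left|right]; lra).
        intros x. destruct (Hge x) as [A B]. destruct (Hle (ex_intro _ x1 Hx1') x); split; auto; split; auto; [left|right]; lra. }
      destruct (m0_case v w z w1 z1 w2 z2 b1 b2 HT HL1 HL2 HR1 HR2 Hm Hnc) as [Hc|Hc].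
      * left. apply (uniq_pos v w z w1 z1 w2 z2 HT Hv HL1 HL2); intros x; apply Hc.
      * right. destruct (uniq_pos v z w z1 w1 z2 w2 HTs Hv HL2 HL1) as [s Hs].
        -- intros x. destruct (Hc x) as [_ Hq]. unfold pp. unfold qq in Hq. lra.
        -- intros x. destruct (Hc x) as [Hq _]. lra.
        -- exists s. intros x. destruct (Hs x); split; auto.
    + exfalso.
      assert (Hpos : forall x, 0 < pp w1 z1 x /\ 0 < qq w1 z1 x).
      { intros x. destruct (Hge x) as [A B]. split.
        - destruct A; auto. exfalso; apply Hnz; exists x; auto.
        - destruct B; auto. exfalso; apply Hnz; exists x; auto. }
      destruct (Rtotal_order ((b2 - b1) / 2) 0) as [H|[H|H]].
      * eapply (caseB_neg v w z w1 z1 w2 z2 b1 b2); eauto.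
      * destruct (Hu0 H 0) as [A _]. specialize (Hpos 0). lra.
      * eapply (caseB_pos v w z w1 z1 w2 z2 b1 b2); eauto.
  - exfalso.
    assert (Hneg : forall x, pp w1 z1 x < 0 \/ qq w1 z1 x < 0).
    { intros x. destruct (Rlt_le_dec (pp w1 z1 x) 0); auto. destruct (Rlt_le_dec (qq w1 z1 x) 0); auto.
      exfalso; apply Hnex; exists x; auto. }
    destruct (Rtotal_order ((b2 - b1) / 2) 0) as [H|[H|H]].
    * apply (caseC_pos v z w z1 w1 z2 w2 b2 b1 HTs HL2 HL1 HR2 HR1 Hv).
      -- intros x. destruct (Hneg x); [right|left]; unfold pp, qq in *; lra.
      -- lra.
    * destruct (Hu0 H 0) as [A B]. destruct (Hneg 0); lra.
    * apply (caseC_pos v w z w1 z1 w2 z2 b1 b2 HT HL1 HL2 HR1 HR2 Hv Hneg H).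
Qed.

Definition dH (v y : R) := uH v y * (- 2 * v - uH v y) / 2.
Definition ddH (v y : R) := (- v - uH v y) * dH v y.

Lemma uH_der v y : is_derive (uH v) y (dH v y).
Proof.
  unfold dH, uH. auto_derive.
  - pose proof (exp_pos (v * y)). lra.
  - pose proof (exp_pos (v * y)). field. lra.
Qed.

Lemma dH_der v y : is_derive (dH v) y (ddH v y).
Proof.
  unfold ddH.
  pose proof (is_derive_comp (fun s => s * (- 2 * v - s) / 2) (uH v) y ((- 2 * v - 2 * uH v y) / 2) (dH v y)) as HH.
  eapply is_derive_ext; [|eapply is_derive_val; [apply HH|]].
  - intros t. unfold dH. reflexivity.
  - auto_derive; auto. field.
  - apply uH_der.
  - simpl. unfold scal; simpl; unfold mult; simpl. field.
Qed.

Lemma uH_bounds v y : v < 0 -> 0 < uH v y < - 2 * v.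
Proof.
  intros Hv. unfold uH. pose proof (exp_pos (v * y)).
  split.
  - apply Rdiv_lt_0_compat; lra.
  - apply (Rmult_lt_reg_r (1 + exp (v * y))); [lra|]. unfold Rdiv. rewrite Rmult_assoc, Rinv_l by lra. nra.
Qed.

Lemma TWE_H v : v < 0 -> TWE v (H1 v) (H2 v) (dH v) (fun y => 3 * dH v y) (ddH v) (fun y => 3 * ddH v y).
Proof.
  intros Hv.
  assert (Hd : forall y, 0 < dH v y).
  { intros y. unfold dH. pose proof (uH_bounds v y Hv). apply Rdiv_lt_0_compat; [|lra]. nra. }
  split; [intros y; unfold H1; eapply is_derive_val; [apply (is_derive_minus _ _ y _ 0 (uH_der v y) (is_derive_const 1 y))|]; simpl; unfold minus, plus, opp; simpl; ring|].
  split; [intros y; unfold H2; eapply is_derive_val; [apply (is_derive_minus _ _ y _ 0 (is_derive_scal _ y 3 _ (uH_der v y)) (is_derive_const 1 y))|]; simpl; unfold minus, plus, opp; simpl; ring|].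
  split; [intros y; apply dH_der|].
  split; [intros y; apply (is_derive_scal _ y 3 _ (dH_der v y))|].
  split; intros y; unfold H1, H2.
  - rewrite Rmax_left by (specialize (Hd y); lra). unfold ddH. field.
  - rewrite Rmin_right by (specialize (Hd y); lra). unfold ddH. field.
Qed.

Lemma limm_uH v : v < 0 -> limm (uH v) 0.
Proof.
  intros Hv eps He. set (K := - 2 * v). assert (HK : 0 < K) by (unfold K; lra).
  exists (ln (K / eps) / v). intros y Hy.
  pose proof (uH_bounds v y Hv). rewrite Rminus_0_r, Rabs_right by lra.
  assert (ln (K / eps) < v * y).
  { apply (Rmult_lt_compat_r (- v)) in Hy; [|lra].
    replace (ln (K / eps) / v * - v) with (- ln (K / eps)) in Hy by (field; lra). lra. }
  apply exp_increasing in H0. rewrite exp_ln in H0 by (apply Rdiv_lt_0_compat; lra).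
  unfold uH. fold K. pose proof (exp_pos (v * y)).
  apply (Rmult_lt_reg_r (1 + exp (v * y))); [lra|]. unfold Rdiv. rewrite Rmult_assoc, Rinv_l by lra.
  rewrite Rmult_1_r. 
  assert (K < eps * exp (v * y)).
  { apply (Rmult_lt_compat_l eps) in H0; [|lra]. replace (eps * (K / eps)) with K in H0 by (field; lra). lra. }
  nra.
Qed.

Lemma limp_uH v : v < 0 -> limp (uH v) (- 2 * v).
Proof.
  intros Hv eps He. set (K := - 2 * v). assert (HK : 0 < K) by (unfold K; lra).
  exists (ln (eps / K) / v). intros y Hy.
  pose proof (uH_bounds v y Hv). fold K in H. rewrite Rabs_left by lra.
  assert (v * y < ln (eps / K)).
  { apply (Rmult_lt_compat_r (- v)) in Hy; [|lra].
    replace (ln (eps / K) / v * - v) with (- ln (eps / K)) in Hy by (field; lra). lra. }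
  apply exp_increasing in H0. rewrite exp_ln in H0 by (apply Rdiv_lt_0_compat; lra).
  unfold uH. fold K. pose proof (exp_pos (v * y)).
  replace (- (K / (1 + exp (v * y)) - K)) with (K * exp (v * y) / (1 + exp (v * y))) by (field; lra).
  apply (Rmult_lt_reg_r (1 + exp (v * y))); [lra|]. unfold Rdiv. rewrite Rmult_assoc, Rinv_l by lra.
  rewrite Rmult_1_r.
  assert (K * exp (v * y) < eps).
  { apply (Rmult_lt_compat_l K) in H0; [|lra]. replace (K * (eps / K)) with eps in H0 by (field; lra). lra. }
  nra.
Qed.

Lemma limm_refl (f : R -> R) (a : R) : limp f a -> limm (fun x => - f (- x)) (- a).
Proof.
  intros H eps He. destruct (H eps He) as [M HM]. exists (- M). intros x Hx.
  specialize (HM (- x) ltac:(lra)). rewrite <- Rabs_Ropp. replace (- (- f (- x) - - a)) with (f (- x) - a) by ring. auto.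
Qed.
Lemma limp_refl (f : R -> R) (a : R) : limm f a -> limp (fun x => - f (- x)) (- a).
Proof.
  intros H eps He. destruct (H eps He) as [M HM]. exists (- M). intros x Hx.
  specialize (HM (- x) ltac:(lra)). rewrite <- Rabs_Ropp. replace (- (- f (- x) - - a)) with (f (- x) - a) by ring. auto.
Qed.

Lemma TW_lims v g1 g2 : is_TW v g1 g2 -> exists a1 a2 b1 b2 : R,
  limm g1 a1 /\ limm g2 a2 /\ limp g1 b1 /\ limp g2 b2.
Proof.
  intros H. destruct H as [_ [_ [_ [_ [Hex _]]]]]. destruct Hex as [a1 [a2 [b1 [b2 [L1 [L2 [L3 L4]]]]]]].
  exists a1, a2, b1, b2. repeat split; [apply limm_of|apply limm_of|apply limp_of|apply limp_of]; auto.
Qed.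

Lemma H_props v : v < 0 ->
  limm (H1 v) (-1) /\ limm (H2 v) (-1) /\ limp (H1 v) (- 2 * v - 1) /\ limp (H2 v) (- 6 * v - 1).
Proof.
  intros Hv. pose proof (limm_uH v Hv). pose proof (limp_uH v Hv).
  repeat split.
  - apply (limm_lin' (uH v) (fun _ => 1) _ 0 1 1 (-1)); auto. apply limm_const. intros; unfold H1; ring. ring.
  - apply (limm_lin' (uH v) (fun _ => 1) _ 0 1 3 (-1)); auto. apply limm_const. intros; unfold H2; ring. ring.
  - apply (limp_lin' (uH v) (fun _ => 1) _ (- 2 * v) 1 1 (-1)); auto. apply limp_const. intros; unfold H1; ring. ring.
  - apply (limp_lin' (uH v) (fun _ => 1) _ (- 2 * v) 1 3 (-1)); auto. apply limp_const. intros; unfold H2; ring. ring.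
Qed.

Lemma partA_neg (v : R) : v < 0 ->
     exists h1 h2 k1 k2 : R -> R,
       (is_TW v h1 h2 /\ lim_left h1 h2 (-1) (-1) /\
        lim_right h1 h2 (-2 * v - 1) (-6 * v - 1)) /\
       (is_TW v k1 k2 /\ lim_left k1 k2 (-1) (-1) /\
        lim_right k1 k2 (-6 * v - 1) (-2 * v - 1)) /\
       (forall g1 g2 : R -> R,
          is_TW v g1 g2 -> lim_left g1 g2 (-1) (-1) -> ~ profile_const g1 g2 ->
          profile_translate g1 g2 h1 h2 \/ profile_translate g1 g2 k1 k2).
Proof.
  intros Hv. destruct (H_props v Hv) as [L1 [L2 [L3 L4]]].
  pose proof (TWE_H v Hv) as HT. pose proof (TWE_swap _ _ _ _ _ _ _ HT) as HTs.
  exists (H1 v), (H2 v), (H2 v), (H1 v).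
  split; [|split].
  - split; [eapply TW_of_TWE; [exact HT| apply of_limm; exact L1| apply of_limm; exact L2| apply of_limp; exact L3| apply of_limp; exact L4]|].
    split; split; [apply of_limm|apply of_limm|apply of_limp|apply of_limp]; auto.
  - split; [eapply TW_of_TWE; [exact HTs| apply of_limm; exact L2| apply of_limm; exact L1| apply of_limp; exact L4| apply of_limp; exact L3]|].
    split; split; [apply of_limm|apply of_limm|apply of_limp|apply of_limp]; auto.
  - intros g1 g2 HTW [G1 G2] Hnc.
    destruct (TW_lims v g1 g2 HTW) as [a1 [a2 [b1 [b2 [_ [_ [R1 R2]]]]]]].
    destruct (core_neg v g1 g2 _ _ _ _ b1 b2 (TWE_of_TW v g1 g2 HTW) Hv (limm_of _ _ G1) (limm_of _ _ G2) R1 R2 Hnc)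
      as [[s Hs]|[s Hs]]; [left|right]; exists s; auto.
Qed.

Lemma partA_zero : forall g1 g2 : R -> R,
      is_TW 0 g1 g2 -> lim_left g1 g2 (-1) (-1) ->
      forall x, g1 x = -1 /\ g2 x = -1.
Proof.
  intros g1 g2 HTW [G1 G2].
  destruct (TW_lims 0 g1 g2 HTW) as [a1 [a2 [b1 [b2 [_ [_ [R1 R2]]]]]]].
  eapply (core_zero 0 g1 g2); eauto. apply TWE_of_TW; auto. apply limm_of; auto. apply limm_of; auto.
Qed.

Lemma partA_pos : forall v : R, v > 0 -> forall g1 g2 : R -> R,
      is_TW v g1 g2 -> lim_left g1 g2 (-1) (-1) -> profile_const g1 g2.
Proof.
  intros v Hv g1 g2 HTW [G1 G2].
  destruct (TW_lims v g1 g2 HTW) as [a1 [a2 [b1 [b2 [_ [_ [R1 R2]]]]]]].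
  eapply (core_pos v g1 g2); eauto. apply TWE_of_TW; auto. apply limm_of; auto. apply limm_of; auto.
Qed.

Lemma TWE_refl_TW v g1 g2 : is_TW v g1 g2 ->
  exists w1 z1 w2 z2, TWE (- v) (fun x => - g1 (- x)) (fun x => - g2 (- x)) w1 z1 w2 z2.
Proof.
  intros H. pose proof (TWE_refl _ _ _ _ _ _ _ (TWE_of_TW v g1 g2 H)). eexists _, _, _, _; eauto.
Qed.

Lemma const_refl g1 g2 : profile_const (fun x => - g1 (- x)) (fun x => - g2 (- x)) -> profile_const g1 g2.
Proof.
  intros [a1 [a2 H]]. exists (- a1), (- a2). intros x. destruct (H (- x)) as [A B].
  rewrite Ropp_involutive in A, B. split; lra.
Qed.

Lemma partB_zero : forall g1 g2 : R -> R,
      is_TW 0 g1 g2 -> lim_right g1 g2 1 1 ->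
      forall x, g1 x = 1 /\ g2 x = 1.
Proof.
  intros g1 g2 HTW [G1 G2].
  destruct (TW_lims 0 g1 g2 HTW) as [a1 [a2 [b1 [b2 [M1 [M2 _]]]]]].
  destruct (TWE_refl_TW 0 g1 g2 HTW) as [w1 [z1 [w2 [z2 HT]]]].
  rewrite Ropp_0 in HT.
  intros x. destruct (core_zero 0 _ _ _ _ _ _ HT (limm_refl _ _ (limp_of _ _ G1)) (limm_refl _ _ (limp_of _ _ G2))
     (- a1) (- a2) (limp_refl _ _ M1) (limp_refl _ _ M2) eq_refl (- x)) as [A B].
  rewrite Ropp_involutive in A, B. split; lra.
Qed.

Lemma partB_neg : forall v : R, v < 0 -> forall g1 g2 : R -> R,
      is_TW v g1 g2 -> lim_right g1 g2 1 1 -> profile_const g1 g2.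
Proof.
  intros v Hv g1 g2 HTW [G1 G2].
  destruct (TW_lims v g1 g2 HTW) as [a1 [a2 [b1 [b2 [M1 [M2 _]]]]]].
  destruct (TWE_refl_TW v g1 g2 HTW) as [w1 [z1 [w2 [z2 HT]]]].
  apply const_refl.
  eapply (core_pos (- v) _ _ _ _ _ _ HT (limm_refl _ _ (limp_of _ _ G1)) (limm_refl _ _ (limp_of _ _ G2))
     (- a1) (- a2) (limp_refl _ _ M1) (limp_refl _ _ M2)). lra.
Qed.

Lemma limm_eqv (f : R -> R) (a b : R) : limm f a -> a = b -> limm f b.
Proof. intros H ->; auto. Qed.
Lemma limp_eqv (f : R -> R) (a b : R) : limp f a -> a = b -> limp f b.
Proof. intros H ->; auto. Qed.

Lemma partB_pos (v : R) : v > 0 ->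
     exists h1 h2 k1 k2 : R -> R,
       (is_TW v h1 h2 /\ lim_left h1 h2 (-2 * v + 1) (-6 * v + 1) /\
        lim_right h1 h2 1 1) /\
       (is_TW v k1 k2 /\ lim_left k1 k2 (-6 * v + 1) (-2 * v + 1) /\
        lim_right k1 k2 1 1) /\
       (forall g1 g2 : R -> R,
          is_TW v g1 g2 -> lim_right g1 g2 1 1 -> ~ profile_const g1 g2 ->
          profile_translate g1 g2 h1 h2 \/ profile_translate g1 g2 k1 k2).
Proof.
  intros Hv. assert (Hv' : - v < 0) by lra.
  destruct (H_props (- v) Hv') as [L1 [L2 [L3 L4]]].
  pose proof (TWE_refl _ _ _ _ _ _ _ (TWE_H (- v) Hv')) as HT. rewrite Ropp_involutive in HT.
  pose proof (TWE_swap _ _ _ _ _ _ _ HT) as HTs.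
  set (h1 := fun x => - H1 (- v) (- x)). set (h2 := fun x => - H2 (- v) (- x)).
  assert (M1 : limm h1 (-2 * v + 1)) by (eapply limm_eqv; [apply limm_refl, L3| lra]).
  assert (M2 : limm h2 (-6 * v + 1)) by (eapply limm_eqv; [apply limm_refl, L4| lra]).
  assert (P1 : limp h1 1) by (eapply limp_eqv; [apply limp_refl, L1| lra]).
  assert (P2 : limp h2 1) by (eapply limp_eqv; [apply limp_refl, L2| lra]).
  exists h1, h2, h2, h1.
  split; [|split].
  - split; [eapply TW_of_TWE; [exact HT| apply of_limm; exact M1| apply of_limm; exact M2| apply of_limp; exact P1| apply of_limp; exact P2]|].
    split; split; [apply of_limm|apply of_limm|apply of_limp|apply of_limp]; auto.
  - split; [eapply TW_of_TWE; [exact HTs| apply of_limm; exact M2| apply of_limm; exact M1| apply of_limp; exact P2| apply of_limp; exact P1]|].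
    split; split; [apply of_limm|apply of_limm|apply of_limp|apply of_limp]; auto.
  - intros g1 g2 HTW [G1 G2] Hnc.
    destruct (TW_lims v g1 g2 HTW) as [a1 [a2 [b1 [b2 [N1 [N2 _]]]]]].
    destruct (TWE_refl_TW v g1 g2 HTW) as [w1 [z1 [w2 [z2 HG]]]].
    assert (Hnc' : ~ profile_const (fun x => - g1 (- x)) (fun x => - g2 (- x))) by (intros Hc; apply Hnc, const_refl, Hc).
    destruct (core_neg (- v) _ _ _ _ _ _ (- a1) (- a2) HG Hv' (limm_refl _ _ (limp_of _ _ G1)) (limm_refl _ _ (limp_of _ _ G2))
       (limp_refl _ _ N1) (limp_refl _ _ N2) Hnc') as [[s Hs]|[s Hs]]; [left|right]; exists (- s); intros x;
    destruct (Hs (- x)) as [A B]; rewrite Ropp_involutive in A, B; unfold h1, h2;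
    replace (- (x + - s)) with (- x + s) by ring; split; lra.
Qed.

Theorem theorem3 :
  (* (A) *)
  ((forall v : R, v < 0 ->
     exists h1 h2 k1 k2 : R -> R,
       (is_TW v h1 h2 /\ lim_left h1 h2 (-1) (-1) /\
        lim_right h1 h2 (-2 * v - 1) (-6 * v - 1)) /\
       (is_TW v k1 k2 /\ lim_left k1 k2 (-1) (-1) /\
        lim_right k1 k2 (-6 * v - 1) (-2 * v - 1)) /\
       (forall g1 g2 : R -> R,
          is_TW v g1 g2 -> lim_left g1 g2 (-1) (-1) -> ~ profile_const g1 g2 ->
          profile_translate g1 g2 h1 h2 \/ profile_translate g1 g2 k1 k2)) /\
   (forall g1 g2 : R -> R,
      is_TW 0 g1 g2 -> lim_left g1 g2 (-1) (-1) ->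
      forall x, g1 x = -1 /\ g2 x = -1) /\
   (forall v : R, v > 0 -> forall g1 g2 : R -> R,
      is_TW v g1 g2 -> lim_left g1 g2 (-1) (-1) -> profile_const g1 g2))
  /\
  (* (B) *)
  ((forall v : R, v > 0 ->
     exists h1 h2 k1 k2 : R -> R,
       (is_TW v h1 h2 /\ lim_left h1 h2 (-2 * v + 1) (-6 * v + 1) /\
        lim_right h1 h2 1 1) /\
       (is_TW v k1 k2 /\ lim_left k1 k2 (-6 * v + 1) (-2 * v + 1) /\
        lim_right k1 k2 1 1) /\
       (forall g1 g2 : R -> R,
          is_TW v g1 g2 -> lim_right g1 g2 1 1 -> ~ profile_const g1 g2 ->
          profile_translate g1 g2 h1 h2 \/ profile_translate g1 g2 k1 k2)) /\
   (forall g1 g2 : R -> R,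
      is_TW 0 g1 g2 -> lim_right g1 g2 1 1 ->
      forall x, g1 x = 1 /\ g2 x = 1) /\
   (forall v : R, v < 0 -> forall g1 g2 : R -> R,
      is_TW v g1 g2 -> lim_right g1 g2 1 1 -> profile_const g1 g2)).
Proof.
  split; split; [| split | | split].
  - exact partA_neg.
  - exact partA_zero.
  - exact partA_pos.
  - exact partB_pos.
  - exact partB_zero.
  - exact partB_neg.
Qed.
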